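(* For system (3): (i) if $1<\mathscr{R}_0<1+\frac{\sigma_m(\mu+r)}{\mu\beta}C_I$, then $E^*$ is locally asymptotically stable; (ii) whenever $E_1^*$ is an endemic equilibrium and $S_1^*\neq S_2^*$, $E_1^*$ is locally asymptotically stable; (iii) whenever $E_2^*$ is an endemic equilibrium and $S_1^*\ne S_2^*$, $E_2^*$ is unstable.
   Context: Let $A,\sigma_m,\sigma_s,\mu,\rho,\beta,r,C_I$ be positive constants. Write $[x]^+=\max\{0,x\}$ and $T(I_s)=rI_s$ if $I_s<C_I$, $T(I_s)=rC_I$ if $I_s\ge C_I$. System (3) is $$S'=A-\sigma_mSI_m-\sigma_sS[I_s-C_I]^+-\mu S,\quad I_m'=\sigma_mSI_m+\sigma_sS[I_s-C_I]^+-(\mu+\rho+\beta)I_m,\quad I_s'=\beta I_m-T(I_s)-\mu I_s.$$ $\mathscr{R}_0=\frac{A\sigma_m}{\mu(\mu+\beta+\rho)}$. An endemic equilibrium is an equilibrium of (3) with $S,I_m,I_s>0$. $E^*=(S^*,I_m^*,I_s^* )$ with $S^*=\frac{\mu+\beta+\rho}{\sigma_m}$, $I_m^*=\frac{\mu(\mathscr{R}_0-1)}{\sigma_m}$, $I_s^*=\frac{\mu\beta(\mathscr{R}_0-1)}{\sigma_m(\mu+r)}$. Let $p=\frac{(\mu+r)\sigma_m\sigma_sC_I}{\mu(\mu\sigma_m+\beta\sigma_s)}$, $q=\frac{\mu\sigma_m}{\mu\sigma_m+\beta\sigma_s}$, and $S_{1,2}^*=\frac{\mu+\beta+\rho}{2\sigma_m}\big\{\mathscr{R}_0-p+q\mp\sqrt{(\mathscr{R}_0-p-q)^2-4pq}\big\}$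 (minus sign for $S_1^*$, plus for $S_2^*$), $I_{m_i}^*=\frac{\mu\mathscr{R}_0}{\sigma_m}-\frac{\mu S_i^*}{\mu+\beta+\rho}$, $I_{s_i}^*=\frac{\beta\mathscr{R}_0}{\sigma_m}-\frac{\beta S_i^*}{\mu+\beta+\rho}-\frac{rC_I}{\mu}$, $E_i^*=(S_i^*,I_{m_i}^*,I_{s_i}^* )$, $i=1,2$. ''$E_i^*$ is an endemic equilibrium'' means $S_i^*$ is real, $S_i^*>0$, $I_{m_i}^*>0$ and $I_{s_i}^*>C_I$. The right-hand side of (3) is smooth near each of these equilibria (which lie off the plane $I_s=C_I$), so stability refers to the usual local asymptotic stability/instability of equilibria. *)

(* Defs.v *)
From Stdlib Require Import Reals Lra.
From Coquelicot Require Import Coquelicot.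
Open Scope R_scope.

Record Params := mkParams {
  pA : R; psm : R; pss : R; pmu : R; prho : R; pbeta : R; pr : R; pCI : R }.

Definition params_pos (P : Params) : Prop :=
  0 < pA P /\ 0 < psm P /\ 0 < pss P /\ 0 < pmu P /\ 0 < prho P /\
  0 < pbeta P /\ 0 < pr P /\ 0 < pCI P.

Definition posp (x : R) : R := Rmax 0 x.

Definition Tr (P : Params) (Is : R) : R :=
  if Rlt_dec Is (pCI P) then pr P * Is else pr P * pCI P.

Definition fS (P : Params) (S Im Is : R) : R :=
  pA P - psm P * S * Im - pss P * S * posp (Is - pCI P) - pmu P * S.
Definition fIm (P : Params) (S Im Is : R) : R :=
  psm P * S * Im + pss P * S * posp (Is - pCI P) - (pmu P + prho P + pbeta P) * Im.
Definition fIs (P : Params) (S Im Is : R) : R :=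
  pbeta P * Im - Tr P Is - pmu P * Is.

(* A (forward) solution of (3) on [0, +oo): differentiable at every t >= 0
   (a two-sided derivative at t = 0 is harmless: any forward solution can be
   extended to t < 0 by x(0) + t x'(0)). *)
Definition is_solution (P : Params) (S Im Is : R -> R) : Prop :=
  forall t, 0 <= t ->
    is_derive S t (fS P (S t) (Im t) (Is t)) /\
    is_derive Im t (fIm P (S t) (Im t) (Is t)) /\
    is_derive Is t (fIs P (S t) (Im t) (Is t)).

Definition dist3 (a b c a' b' c' : R) : R :=
  sqrt ((a - a') ^ 2 + (b - b') ^ 2 + (c - c') ^ 2).

Definition point := (R * R * R)%type.

Definition lyap_stable (P : Params) (E : point) : Prop :=
  let '(Se, Ime, Ise) := E in
  forall eps, 0 < eps -> exists delta, 0 < delta /\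
    forall S0 Im0 Is0, dist3 S0 Im0 Is0 Se Ime Ise < delta ->
      (exists S Im Is, is_solution P S Im Is /\
          S 0 = S0 /\ Im 0 = Im0 /\ Is 0 = Is0) /\
      (forall S Im Is, is_solution P S Im Is ->
          S 0 = S0 -> Im 0 = Im0 -> Is 0 = Is0 ->
          forall t, 0 <= t -> dist3 (S t) (Im t) (Is t) Se Ime Ise < eps).

Definition attractive (P : Params) (E : point) : Prop :=
  let '(Se, Ime, Ise) := E in
  exists delta, 0 < delta /\
    forall S Im Is, is_solution P S Im Is ->
      dist3 (S 0) (Im 0) (Is 0) Se Ime Ise < delta ->
      is_lim (fun t => dist3 (S t) (Im t) (Is t) Se Ime Ise) p_infty 0.

Definition loc_asym_stable (P : Params) (E : point) : Prop :=
  lyap_stable P E /\ attractive P E.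

Definition unstable (P : Params) (E : point) : Prop := ~ lyap_stable P E.

Definition Rnum (P : Params) : R :=
  pA P * psm P / (pmu P * (pmu P + pbeta P + prho P)).

Definition Estar (P : Params) : point :=
  ((pmu P + pbeta P + prho P) / psm P,
   pmu P * (Rnum P - 1) / psm P,
   pmu P * pbeta P * (Rnum P - 1) / (psm P * (pmu P + pr P))).

Definition pp (P : Params) : R :=
  (pmu P + pr P) * psm P * pss P * pCI P /
  (pmu P * (pmu P * psm P + pbeta P * pss P)).
Definition qq (P : Params) : R :=
  pmu P * psm P / (pmu P * psm P + pbeta P * pss P).

Definition disc (P : Params) : R :=
  (Rnum P - pp P - qq P) ^ 2 - 4 * pp P * qq P.

(* S_1^* (minus sign) and S_2^* (plus sign); meaningful when disc P >= 0 *)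
Definition Sone (P : Params) : R :=
  (pmu P + pbeta P + prho P) / (2 * psm P) *
  (Rnum P - pp P + qq P - sqrt (disc P)).
Definition Stwo (P : Params) : R :=
  (pmu P + pbeta P + prho P) / (2 * psm P) *
  (Rnum P - pp P + qq P + sqrt (disc P)).

Definition Im_of (P : Params) (S : R) : R :=
  pmu P * Rnum P / psm P - pmu P * S / (pmu P + pbeta P + prho P).
Definition Is_of (P : Params) (S : R) : R :=
  pbeta P * Rnum P / psm P - pbeta P * S / (pmu P + pbeta P + prho P)
  - pr P * pCI P / pmu P.

Definition Eone (P : Params) : point := (Sone P, Im_of P (Sone P), Is_of P (Sone P)).
Definition Etwo (P : Params) : point := (Stwo P, Im_of P (Stwo P), Is_of P (Stwo P)).

(* "E_i^* is an endemic equilibrium": S_i^* real (discriminant >= 0),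
   S_i^* > 0, I_mi^* > 0, I_si^* > C_I. *)
Definition endemic_Ei (P : Params) (S : R) : Prop :=
  0 <= disc P /\ 0 < S /\ 0 < Im_of P S /\ pCI P < Is_of P S.

(* Main.v *)
Require Import Defs.
From Stdlib Require Import Reals Lra Lia Psatz Classical.
From Coquelicot Require Import Coquelicot.
Open Scope R_scope.

Lemma lip_cont (f : R -> R) K x :
  (forall y, Rabs (f y - f x) <= K * Rabs (y - x)) -> continuous f x.
Proof.
  intros H. apply continuity_pt_filterlim.
  unfold continuity_pt, continue_in, limit1_in, limit_in; simpl.
  intros eps Heps. exists (eps / (Rabs K + 1)). split.
  { apply Rdiv_lt_0_compat; [lra| pose proof (Rabs_pos K); lra]. }
  intros y [_ Hy]. unfold R_dist in *. specialize (H y).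
  pose proof (Rabs_pos K). pose proof (Rabs_pos (y - x)).
  assert (K <= Rabs K) by apply Rle_abs.
  assert (Rabs (y - x) * (Rabs K + 1) < eps).
  { apply Rmult_lt_compat_r with (r := Rabs K + 1) in Hy; [|lra].
    unfold Rdiv in Hy. rewrite Rmult_assoc, Rinv_l in Hy; lra. }
  nra.
Qed.

Definition nrm3 (x : nat -> R) := Rabs (x 0%nat) + Rabs (x 1%nat) + Rabs (x 2%nat).

Definition lipG (G : nat -> (nat -> R) -> R) (L : R) :=
  forall i x y, Rabs (G i x - G i y) <= L * (Rabs (x 0%nat - y 0%nat) + Rabs (x 1%nat - y 1%nat) + Rabs (x 2%nat - y 2%nat)).
Definition bndG (G : nat -> (nat -> R) -> R) (M : R) := forall i x, Rabs (G i x) <= M.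

Fixpoint pic (G : nat -> (nat -> R) -> R) (x0 : nat -> R) (n : nat) : nat -> R -> R :=
  match n with
  | O => fun i _ => x0 i
  | S n => fun i t => x0 i + RInt (fun s => G i (fun j => pic G x0 n j (Rmax 0 s))) 0 t
  end.

Lemma Rmax0_lip s s' : Rabs (Rmax 0 s - Rmax 0 s') <= Rabs (s - s').
Proof. unfold Rmax; destruct (Rle_dec 0 s), (Rle_dec 0 s'); unfold Rabs; repeat destruct Rcase_abs; lra. Qed.

Lemma comp_lip G L M (F : nat -> R -> R) i :
  0 <= L -> 0 <= M -> lipG G L -> (forall j t s, (j < 3)%nat -> Rabs (F j t - F j s) <= M * Rabs (t - s)) ->
  forall t s, Rabs (G i (fun j => F j (Rmax 0 t)) - G i (fun j => F j (Rmax 0 s))) <= (3 * L * M) * Rabs (t - s).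
Proof.
  intros HL0 HM HL HF t s. eapply Rle_trans. apply HL.
  pose proof (Rmax0_lip t s).
  pose proof (HF 0%nat (Rmax 0 t) (Rmax 0 s) ltac:(lia)). pose proof (HF 1%nat (Rmax 0 t) (Rmax 0 s) ltac:(lia)).
  pose proof (HF 2%nat (Rmax 0 t) (Rmax 0 s) ltac:(lia)).
  assert (M * Rabs (Rmax 0 t - Rmax 0 s) <= M * Rabs (t - s)) by (apply Rmult_le_compat_l; lra).
  assert (forall a b, a <= b -> L * a <= L * b) by (intros; apply Rmult_le_compat_l; lra).
  eapply Rle_trans. apply H4. apply Rplus_le_compat; [apply Rplus_le_compat|]; eassumption.
  nra.
Qed.

Lemma exRI (f : R -> R) a b : (forall x, continuous f x) -> ex_RInt f a b.
Proof. intros H. apply (@ex_RInt_continuous R_CompleteNormedModule). intros; apply H. Qed.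

Lemma RInt_abs_bound (f : R -> R) a b M : (forall x, continuous f x) -> (forall x, Rabs (f x) <= M) ->
  Rabs (RInt f a b) <= M * Rabs (b - a).
Proof.
  intros Hc HM. destruct (Rle_dec a b).
  - rewrite (Rabs_right (b - a)) by lra. rewrite Rmult_comm. apply abs_RInt_le_const; auto. apply exRI; auto.
  - rewrite <- opp_RInt_swap by (apply exRI; auto). unfold opp; simpl. rewrite Rabs_Ropp.
    rewrite (Rabs_left (b - a)) by lra. replace (- (b - a)) with (a - b) by ring. rewrite Rmult_comm.
    apply abs_RInt_le_const; auto; try lra. apply exRI; auto.
Qed.

Lemma RInt_diff (f : R -> R) a b : (forall x, continuous f x) -> RInt f 0 a - RInt f 0 b = RInt f b a.
Proof.
  intros H. rewrite <- (@RInt_Chasles R_CompleteNormedModule f 0 b a) by (apply exRI; auto). unfold plus; simpl. ring.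
Qed.

Lemma pic_lip G L M x0 : 0 <= L -> 0 <= M -> lipG G L -> bndG G M ->
  forall n j t s, Rabs (pic G x0 n j t - pic G x0 n j s) <= M * Rabs (t - s).
Proof.
  intros HL0 HM HL HB. induction n; intros j t s; simpl.
  - rewrite Rminus_diag, Rabs_R0. pose proof (Rabs_pos (t - s)); nra.
  - assert (Hc : forall x, continuous (fun s0 => G j (fun j0 => pic G x0 n j0 (Rmax 0 s0))) x).
    { intros x. apply (lip_cont _ (3 * L * M)). intros y. apply comp_lip; auto. }
    replace (x0 j + RInt (fun s0 => G j (fun j0 => pic G x0 n j0 (Rmax 0 s0))) 0 t -
       (x0 j + RInt (fun s0 => G j (fun j0 => pic G x0 n j0 (Rmax 0 s0))) 0 s))
      with (RInt (fun s0 => G j (fun j0 => pic G x0 n j0 (Rmax 0 s0))) 0 t -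
       RInt (fun s0 => G j (fun j0 => pic G x0 n j0 (Rmax 0 s0))) 0 s) by ring.
    rewrite RInt_diff by auto. apply RInt_abs_bound; auto.
Qed.

Lemma pic_cont G L M x0 n j : 0 <= L -> 0 <= M -> lipG G L -> bndG G M ->
  forall x, continuous (fun s0 => G j (fun j0 => pic G x0 n j0 (Rmax 0 s0))) x.
Proof.
  intros HL0 HM HL HB x. apply (lip_cont _ (3 * L * M)). intros y. apply comp_lip; auto.
  intros; apply (pic_lip G L M); auto.
Qed.

Lemma pic_0 G x0 n j : pic G x0 n j 0 = x0 j.
Proof. destruct n; simpl; auto. rewrite RInt_point. unfold zero; simpl; ring. Qed.

Lemma cont_Aexp A K x : continuous (fun s => A * exp (K * s)) x.
Proof. apply (ex_derive_continuous (V:=R_NormedModule)). auto_derive. auto. Qed.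

Lemma RInt_Aexp A K t : K <> 0 -> RInt (fun s => A * exp (K * s)) 0 t = A * (exp (K * t) - 1) / K.
Proof.
  intros HK. apply is_RInt_unique.
  assert (H := @is_RInt_derive R_CompleteNormedModule (fun s => A * exp (K * s) / K) (fun s => A * exp (K * s)) 0 t).
  replace (A * (exp (K * t) - 1) / K) with (minus (A * exp (K * t) / K) (A * exp (K * 0) / K)).
  apply H.
  - intros x _. auto_derive; auto. field; auto.
  - intros x _. apply cont_Aexp.
  - unfold minus, plus, opp; simpl. rewrite Rmult_0_r, exp_0. field; auto.
Qed.

Lemma int_exp_bound (f : R -> R) A K t : 0 <= t -> 0 < K -> 0 <= A -> (forall x, continuous f x) ->
  (forall s, 0 <= s <= t -> Rabs (f s) <= A * exp (K * s)) ->
  Rabs (RInt f 0 t) <= A * exp (K * t) / K.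
Proof.
  intros Ht HK HA Hc Hb. eapply Rle_trans. apply abs_RInt_le; auto. apply exRI; auto.
  eapply Rle_trans. apply (RInt_le _ (fun s => A * exp (K * s))); auto.
  - apply exRI. intros x. apply continuous_Rabs_comp. apply Hc.
  - apply exRI. intros; apply cont_Aexp.
  - intros x Hx. apply Hb; lra.
  - rewrite RInt_Aexp by lra. apply Rmult_le_compat_r. left; apply Rinv_0_lt_compat; lra.
    pose proof (exp_pos (K * t)). nra.
Qed.

Lemma int_zero_bound (f : R -> R) t : t <= 0 -> (forall x, continuous f x) ->
  (forall s, t <= s <= 0 -> f s = 0) -> RInt f 0 t = 0.
Proof.
  intros Ht Hc Hz. rewrite <- opp_RInt_swap by (apply exRI; auto).
  assert (Rabs (RInt f t 0) <= (0 - t) * 0).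
  { apply abs_RInt_le_const; auto. apply exRI; auto. intros s Hs. rewrite Hz; auto. rewrite Rabs_R0; lra. }
  rewrite Rmult_0_r in H. pose proof (Rabs_pos (RInt f t 0)).
  assert (RInt f t 0 = 0) by (revert H; unfold Rabs; destruct Rcase_abs; lra).
  unfold opp; simpl. rewrite H1; ring.
Qed.

Lemma G_ext G L i x y : lipG G L -> x 0%nat = y 0%nat -> x 1%nat = y 1%nat -> x 2%nat = y 2%nat -> G i x = G i y.
Proof.
  intros HL H0 H1 H2. specialize (HL i x y). rewrite H0, H1, H2, !Rminus_diag, !Rabs_R0 in HL.
  revert HL. replace (L * (0 + 0 + 0)) with 0 by ring. unfold Rabs; destruct Rcase_abs; lra.
Qed.

Lemma RInt_sub (f g : R -> R) a b : (forall x, continuous f x) -> (forall x, continuous g x) ->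
  RInt (fun s => f s - g s) a b = RInt f a b - RInt g a b.
Proof. intros. apply (@RInt_minus R_CompleteNormedModule); apply exRI; auto. Qed.

Definition Dn G x0 n t := Rabs (pic G x0 (S n) 0%nat t - pic G x0 n 0%nat t)
  + Rabs (pic G x0 (S n) 1%nat t - pic G x0 n 1%nat t) + Rabs (pic G x0 (S n) 2%nat t - pic G x0 n 2%nat t).

Lemma Dn_bound G L M x0 : 0 < L -> 0 <= M -> lipG G L -> bndG G M ->
  forall n t, Dn G x0 n t <= (M / (2 * L)) * (/2) ^ n * exp (6 * L * Rabs t).
Proof.
  intros HL0 HM HL HB. induction n; intros t.
  - unfold Dn; simpl. rewrite !RInt_const. unfold scal; simpl; unfold mult; simpl.
    assert (Hc : forall i, Rabs ((t - 0) * G i (fun j => x0 j)) <= M * Rabs t).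
    { intros i. rewrite Rabs_mult, Rminus_0_r, Rmult_comm. apply Rmult_le_compat_r. apply Rabs_pos. apply HB. }
    replace (x0 0%nat + (t - 0) * G 0%nat (fun j => x0 j) - x0 0%nat) with ((t - 0) * G 0%nat (fun j => x0 j)) by ring.
    replace (x0 1%nat + (t - 0) * G 1%nat (fun j => x0 j) - x0 1%nat) with ((t - 0) * G 1%nat (fun j => x0 j)) by ring.
    replace (x0 2%nat + (t - 0) * G 2%nat (fun j => x0 j) - x0 2%nat) with ((t - 0) * G 2%nat (fun j => x0 j)) by ring.
    pose proof (Hc 0%nat). pose proof (Hc 1%nat). pose proof (Hc 2%nat).
    pose proof (exp_ineq1_le (6 * L * Rabs t)). pose proof (Rabs_pos t).
    assert (3 * M * Rabs t <= M / (2 * L) * exp (6 * L * Rabs t)).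
    { apply Rmult_le_reg_l with (r := 2 * L); [lra|]. unfold Rdiv.
      replace (2 * L * (M * / (2 * L) * exp (6 * L * Rabs t))) with (M * exp (6 * L * Rabs t)) by (field; lra).
      nra. }
    lra.
  - assert (Hd : forall i, pic G x0 (S (S n)) i t - pic G x0 (S n) i t =
       RInt (fun s => G i (fun j => pic G x0 (S n) j (Rmax 0 s)) - G i (fun j => pic G x0 n j (Rmax 0 s))) 0 t).
    { intros i. rewrite RInt_sub by (intros; apply (pic_cont G L M); auto; lra). simpl. ring. }
    assert (Hcd : forall i x, continuous (fun s => G i (fun j => pic G x0 (S n) j (Rmax 0 s)) - G i (fun j => pic G x0 n j (Rmax 0 s))) x).
    { intros i x. apply (@continuous_minus R_UniformSpace R_AbsRing R_NormedModule); apply (pic_cont G L M); auto; lra. }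
    unfold Dn. rewrite !Hd.
    destruct (Rle_dec 0 t) as [Ht|Ht].
    + assert (Hi : forall i, Rabs (RInt (fun s => G i (fun j => pic G x0 (S n) j (Rmax 0 s)) - G i (fun j => pic G x0 n j (Rmax 0 s))) 0 t)
                <= (L * (M / (2 * L) * (/ 2) ^ n)) * exp (6 * L * t) / (6 * L)).
      { intros i. apply int_exp_bound; auto; try lra.
        - apply Rmult_le_pos; [lra|]. apply Rmult_le_pos. apply Rmult_le_pos; [lra|]. left; apply Rinv_0_lt_compat; lra.
          apply pow_le; lra.
        - intros s Hs. eapply Rle_trans. apply HL. rewrite Rmax_right by lra.
          specialize (IHn s). unfold Dn in IHn. rewrite (Rabs_right s) in IHn by lra.
          rewrite Rmult_assoc. apply Rmult_le_compat_l; lra. }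
      pose proof (Hi 0%nat). pose proof (Hi 1%nat). pose proof (Hi 2%nat).
      rewrite (Rabs_right t) by lra.
      replace (M / (2 * L) * (/ 2) ^ S n * exp (6 * L * t)) with
        (3 * ((L * (M / (2 * L) * (/ 2) ^ n)) * exp (6 * L * t) / (6 * L))) by (simpl; field; lra).
      lra.
    + rewrite !int_zero_bound; auto; try lra.
      * rewrite Rabs_R0. pose proof (exp_pos (6 * L * Rabs t)). pose proof (pow_lt (/2) (S n) ltac:(lra)).
        assert (0 <= M / (2 * L)) by (apply Rmult_le_pos; [lra| left; apply Rinv_0_lt_compat; lra]).
        assert (0 <= M / (2 * L) * (/ 2) ^ S n) by nra. nra.
      * intros s Hs. rewrite Rmax_left by lra. apply Rminus_diag_eq. apply (G_ext G L); auto; rewrite !pic_0; auto.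
      * intros s Hs. rewrite Rmax_left by lra. apply Rminus_diag_eq. apply (G_ext G L); auto; rewrite !pic_0; auto.
      * intros s Hs. rewrite Rmax_left by lra. apply Rminus_diag_eq. apply (G_ext G L); auto; rewrite !pic_0; auto.
Qed.

Lemma exp_mono a b : a <= b -> exp a <= exp b.
Proof. intros [H|H]. left; apply exp_increasing; auto. subst; lra. Qed.

Lemma small_pow a b K : 0 <= K -> (forall n, a <= b + K * (/2) ^ n) -> a <= b.
Proof.
  intros HK H. apply Rle_plus_epsilon. intros eps Heps.
  destruct (pow_lt_1_zero (/2) ltac:(rewrite Rabs_right; lra) (eps / (K + 1))) as [N HN].
  { apply Rdiv_lt_0_compat; lra. }
  specialize (HN N (le_n _)). specialize (H N). rewrite Rabs_right in HN by (left; apply pow_lt; lra).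
  assert (K * (/2) ^ N <= eps).
  { apply Rmult_lt_compat_r with (r := K + 1) in HN; [|lra].
    unfold Rdiv in HN. rewrite Rmult_assoc, Rinv_l in HN by lra. pose proof (pow_lt (/2) N ltac:(lra)). nra. }
  lra.
Qed.

Lemma comp_le_Dn G x0 n i t : (i < 3)%nat -> Rabs (pic G x0 (S n) i t - pic G x0 n i t) <= Dn G x0 n t.
Proof.
  intros Hi. unfold Dn.
  pose proof (Rabs_pos (pic G x0 (S n) 0%nat t - pic G x0 n 0%nat t)).
  pose proof (Rabs_pos (pic G x0 (S n) 1%nat t - pic G x0 n 1%nat t)).
  pose proof (Rabs_pos (pic G x0 (S n) 2%nat t - pic G x0 n 2%nat t)).
  destruct i as [|[|[|i]]]; try lra. lia.
Qed.

Lemma pic_tail G L M x0 : 0 < L -> 0 <= M -> lipG G L -> bndG G M ->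
  forall n k i t, (i < 3)%nat -> Rabs (pic G x0 (n + k) i t - pic G x0 n i t) <=
     2 * (M / (2 * L)) * (/2) ^ n * exp (6 * L * Rabs t) * (1 - (/2) ^ k).
Proof.
  intros HL0 HM HL HB n k i t Hi. induction k.
  - rewrite Nat.add_0_r, Rminus_diag, Rabs_R0. simpl. lra.
  - replace (pic G x0 (n + S k) i t - pic G x0 n i t) with
      ((pic G x0 (S (n + k)) i t - pic G x0 (n + k) i t) + (pic G x0 (n + k) i t - pic G x0 n i t))
      by (rewrite Nat.add_succ_r; ring).
    eapply Rle_trans. apply Rabs_triang.
    pose proof (comp_le_Dn G x0 (n + k) i t Hi). pose proof (Dn_bound G L M x0 HL0 HM HL HB (n + k) t).
    rewrite pow_add in H0. change ((/2)^(S k)) with (/2 * (/2)^k).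
    set (a := M / (2 * L)) in *. set (p := (/2)^n) in *. set (q := (/2)^k) in *. set (e := exp (6 * L * Rabs t)) in *.
    replace (2 * a * p * e * (1 - / 2 * q)) with (2 * a * p * e * (1 - q) + a * (p * q) * e) by field. lra.
Qed.

Definition picX G x0 i t := real (Lim_seq (fun n => pic G x0 n i t)).

Lemma picX_lim G L M x0 : 0 < L -> 0 <= M -> lipG G L -> bndG G M ->
  forall i t, (i < 3)%nat -> is_lim_seq (fun n => pic G x0 n i t) (picX G x0 i t).
Proof.
  intros HL0 HM HL HB i t Hi.
  assert (He : ex_finite_lim_seq (fun n => pic G x0 n i t)).
  { apply ex_lim_seq_cauchy_corr. intros eps.
    set (E := 2 * (M / (2 * L)) * exp (6 * L * Rabs t)).
    assert (HE : 0 <= E).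
    { unfold E. pose proof (exp_pos (6 * L * Rabs t)).
      assert (0 <= M / (2 * L)) by (apply Rmult_le_pos; [lra| left; apply Rinv_0_lt_compat; lra]). nra. }
    destruct (pow_lt_1_zero (/2) ltac:(rewrite Rabs_right; lra) (eps / (E + 1))) as [N HN].
    { apply Rdiv_lt_0_compat. apply cond_pos. lra. }
    exists N. intros n m Hn Hm.
    assert (Hb : forall a b, (N <= a)%nat -> (a <= b)%nat -> Rabs (pic G x0 b i t - pic G x0 a i t) < eps).
    { intros a b Ha Hab. replace b with (a + (b - a))%nat by lia.
      eapply Rle_lt_trans. apply (pic_tail G L M); auto.
      specialize (HN a Ha). rewrite Rabs_right in HN by (left; apply pow_lt; lra).
      pose proof (pow_lt (/2) (b - a) ltac:(lra)). pose proof (pow_lt (/2) a ltac:(lra)).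
      assert ((/2) ^ a * (E + 1) < eps).
      { apply Rmult_lt_compat_r with (r := E + 1) in HN; [|lra].
        unfold Rdiv in HN. rewrite Rmult_assoc, Rinv_l in HN by lra. lra. }
      fold E. replace (2 * (M / (2 * L)) * (/ 2) ^ a * exp (6 * L * Rabs t)) with (E * (/2) ^ a) by (unfold E; ring).
      assert (0 <= E * (/2) ^ a * (/2) ^ (b - a)) by (apply Rmult_le_pos; [apply Rmult_le_pos|]; lra).
      nra. }
    destruct (Nat.le_ge_cases n m).
    - rewrite <- Rabs_Ropp. replace (- (pic G x0 n i t - pic G x0 m i t)) with (pic G x0 m i t - pic G x0 n i t) by ring. auto.
    - auto. }
  destruct He as [l Hl]. unfold picX. rewrite (is_lim_seq_unique _ _ Hl). simpl. auto.
Qed.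

Lemma picX_tail G L M x0 : 0 < L -> 0 <= M -> lipG G L -> bndG G M ->
  forall n i t, (i < 3)%nat -> Rabs (picX G x0 i t - pic G x0 n i t) <=
     2 * (M / (2 * L)) * (/2) ^ n * exp (6 * L * Rabs t).
Proof.
  intros HL0 HM HL HB n i t Hi. apply Rle_plus_epsilon. intros eps Heps.
  pose proof (picX_lim G L M x0 HL0 HM HL HB i t Hi) as H. apply is_lim_seq_spec in H.
  destruct (H (mkposreal eps Heps)) as [N HN]. simpl in HN.
  specialize (HN (n + N)%nat ltac:(lia)).
  pose proof (pic_tail G L M x0 HL0 HM HL HB n N i t Hi).
  pose proof (pow_lt (/2) N ltac:(lra)).
  assert (0 <= 2 * (M / (2 * L)) * (/ 2) ^ n * exp (6 * L * Rabs t)).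
  { pose proof (exp_pos (6 * L * Rabs t)). pose proof (pow_lt (/2) n ltac:(lra)).
    assert (0 <= M / (2 * L)) by (apply Rmult_le_pos; [lra| left; apply Rinv_0_lt_compat; lra]).
    apply Rmult_le_pos; [|lra]. apply Rmult_le_pos; [lra|lra]. }
  replace (picX G x0 i t - pic G x0 n i t) with
    (- (pic G x0 (n + N) i t - picX G x0 i t) + (pic G x0 (n + N) i t - pic G x0 n i t)) by ring.
  eapply Rle_trans. apply Rabs_triang. rewrite Rabs_Ropp. nra.
Qed.

Lemma tail_nonneg M L n t : 0 < L -> 0 <= M -> 0 <= 2 * (M / (2 * L)) * (/2) ^ n * exp (6 * L * Rabs t).
Proof.
  intros. pose proof (exp_pos (6 * L * Rabs t)). pose proof (pow_lt (/2) n ltac:(lra)).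
  assert (0 <= M / (2 * L)) by (apply Rmult_le_pos; [lra| left; apply Rinv_0_lt_compat; lra]).
  apply Rmult_le_pos; [|lra]. apply Rmult_le_pos; [lra|lra].
Qed.

Lemma picX_0 G L M x0 : 0 < L -> 0 <= M -> lipG G L -> bndG G M ->
  forall i, (i < 3)%nat -> picX G x0 i 0 = x0 i.
Proof.
  intros HL0 HM HL HB i Hi.
  assert (Rabs (picX G x0 i 0 - x0 i) <= 0).
  { apply (small_pow _ _ (2 * (M / (2 * L)) * exp (6 * L * Rabs 0))).
    pose proof (tail_nonneg M L 0 0 HL0 HM). simpl in H. lra.
    intros n. pose proof (picX_tail G L M x0 HL0 HM HL HB n i 0 Hi). rewrite pic_0 in H. lra. }
  revert H. unfold Rabs; destruct Rcase_abs; lra.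
Qed.

Lemma abs3 a b c : Rabs (a + b - c) <= Rabs a + Rabs b + Rabs c.
Proof. unfold Rabs; repeat destruct Rcase_abs; lra. Qed.

Lemma picX_lip G L M x0 : 0 < L -> 0 <= M -> lipG G L -> bndG G M ->
  forall i t s, (i < 3)%nat -> Rabs (picX G x0 i t - picX G x0 i s) <= M * Rabs (t - s).
Proof.
  intros HL0 HM HL HB i t s Hi.
  apply (small_pow _ _ (2 * (M / (2 * L)) * exp (6 * L * Rabs t) + 2 * (M / (2 * L)) * exp (6 * L * Rabs s))).
  pose proof (tail_nonneg M L 0 t HL0 HM). pose proof (tail_nonneg M L 0 s HL0 HM). simpl in *. lra.
  intros n. pose proof (picX_tail G L M x0 HL0 HM HL HB n i t Hi).
  pose proof (picX_tail G L M x0 HL0 HM HL HB n i s Hi).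
  pose proof (pic_lip G L M x0 ltac:(lra) HM HL HB n i t s).
  replace (picX G x0 i t - picX G x0 i s) with
    ((picX G x0 i t - pic G x0 n i t) + (pic G x0 n i t - pic G x0 n i s) - (picX G x0 i s - pic G x0 n i s)) by ring.
  eapply Rle_trans. apply abs3. 
  replace (2 * (M / (2 * L)) * (/ 2) ^ n * exp (6 * L * Rabs t)) with (2 * (M / (2 * L)) * exp (6 * L * Rabs t) * (/ 2) ^ n) in H by ring.
  replace (2 * (M / (2 * L)) * (/ 2) ^ n * exp (6 * L * Rabs s)) with (2 * (M / (2 * L)) * exp (6 * L * Rabs s) * (/ 2) ^ n) in H0 by ring.
  lra.
Qed.

Lemma RInt_abs_bound_loc (f : R -> R) t B : (forall x, continuous f x) ->
  (forall s, Rabs s <= Rabs t -> Rabs (f s) <= B) -> Rabs (RInt f 0 t) <= B * Rabs t.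
Proof.
  intros Hc HB. destruct (Rle_dec 0 t).
  - rewrite (Rabs_right t) by lra. rewrite Rmult_comm. replace t with (t - 0) at 2 by ring.
    apply abs_RInt_le_const; auto. apply exRI; auto.
    intros s Hs. apply HB. rewrite !Rabs_right; lra.
  - rewrite <- opp_RInt_swap by (apply exRI; auto). unfold opp; simpl. rewrite Rabs_Ropp.
    rewrite (Rabs_left t) by lra. replace (- t) with (0 - t) by ring. rewrite Rmult_comm.
    apply abs_RInt_le_const; auto; try lra. apply exRI; auto.
    intros s Hs. apply HB. rewrite (Rabs_left t) by lra. unfold Rabs; destruct Rcase_abs; lra.
Qed.

Lemma picX_cont G L M x0 i : 0 < L -> 0 <= M -> lipG G L -> bndG G M ->
  forall x, continuous (fun s0 => G i (fun j0 => picX G x0 j0 (Rmax 0 s0))) x.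
Proof.
  intros HL0 HM HL HB x. apply (lip_cont _ (3 * L * M)). intros y. apply comp_lip; auto; try lra.
  intros; apply (picX_lip G L M); auto.
Qed.

Lemma picX_int G L M x0 : 0 < L -> 0 <= M -> lipG G L -> bndG G M ->
  forall i t, (i < 3)%nat -> picX G x0 i t = x0 i + RInt (fun s => G i (fun j => picX G x0 j (Rmax 0 s))) 0 t.
Proof.
  intros HL0 HM HL HB i t Hi.
  set (C := 2 * (M / (2 * L)) * exp (6 * L * Rabs t)).
  assert (HC : 0 <= C) by (pose proof (tail_nonneg M L 0 t HL0 HM); simpl in H; unfold C; lra).
  assert (Rabs (picX G x0 i t - (x0 i + RInt (fun s => G i (fun j => picX G x0 j (Rmax 0 s))) 0 t)) <= 0).
  { apply (small_pow _ _ (C + 3 * L * C * Rabs t)).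
    pose proof (Rabs_pos t). assert (0 <= L * C) by (apply Rmult_le_pos; lra). assert (0 <= L * C * Rabs t) by (apply Rmult_le_pos; lra). lra.
    intros n. pose proof (picX_tail G L M x0 HL0 HM HL HB (S n) i t Hi).
    change (pic G x0 (S n) i t) with (x0 i + RInt (fun s => G i (fun j => pic G x0 n j (Rmax 0 s))) 0 t) in H.
    assert (H2 : Rabs (RInt (fun s => G i (fun j => pic G x0 n j (Rmax 0 s)) - G i (fun j => picX G x0 j (Rmax 0 s))) 0 t)
       <= (3 * L * (C * (/2) ^ n)) * Rabs t).
    { apply RInt_abs_bound_loc.
      - intros x. apply (@continuous_minus R_UniformSpace R_AbsRing R_NormedModule).
        apply (pic_cont G L M); auto; lra. apply (picX_cont G L M); auto.
      - intros s Hs. eapply Rle_trans. apply HL.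
        assert (Hr : Rabs (Rmax 0 s) <= Rabs t).
        { unfold Rmax; destruct Rle_dec; [exact Hs | rewrite Rabs_R0; apply Rabs_pos]. }
        assert (Hj : forall j, (j < 3)%nat -> Rabs (pic G x0 n j (Rmax 0 s) - picX G x0 j (Rmax 0 s)) <= C * (/2) ^ n).
        { intros j Hj. rewrite Rabs_minus_sym. eapply Rle_trans. apply (picX_tail G L M); auto.
          unfold C. pose proof (exp_mono (6 * L * Rabs (Rmax 0 s)) (6 * L * Rabs t) ltac:(nra)).
          pose proof (pow_lt (/2) n ltac:(lra)).
          assert (0 <= M / (2 * L)) by (apply Rmult_le_pos; [lra| left; apply Rinv_0_lt_compat; lra]).
          assert (0 <= 2 * (M / (2 * L)) * (/ 2) ^ n) by (apply Rmult_le_pos; [|lra]; lra).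
          replace (2 * (M / (2 * L)) * exp (6 * L * Rabs t) * (/ 2) ^ n) with (2 * (M / (2 * L)) * (/ 2) ^ n * exp (6 * L * Rabs t)) by ring.
          apply Rmult_le_compat_l; auto. }
        pose proof (Hj 0%nat ltac:(lia)). pose proof (Hj 1%nat ltac:(lia)). pose proof (Hj 2%nat ltac:(lia)).
        replace (3 * L * (C * (/ 2) ^ n)) with (L * (C * (/ 2) ^ n + C * (/ 2) ^ n + C * (/ 2) ^ n)) by ring.
        apply Rmult_le_compat_l; lra. }
    rewrite RInt_sub in H2.
    2: { intros x. apply (pic_cont G L M); auto; lra. }
    2: { intros x. apply (picX_cont G L M); auto. }
    change ((/2) ^ (S n)) with (/2 * (/2)^n) in H.
    replace (2 * (M / (2 * L)) * (/ 2 * (/ 2) ^ n) * exp (6 * L * Rabs t)) with (C * (/2) * (/2)^n) in H by (unfold C; ring).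
    replace (picX G x0 i t - (x0 i + RInt (fun s => G i (fun j => picX G x0 j (Rmax 0 s))) 0 t)) with
      ((picX G x0 i t - (x0 i + RInt (fun s => G i (fun j => pic G x0 n j (Rmax 0 s))) 0 t)) +
       (RInt (fun s => G i (fun j => pic G x0 n j (Rmax 0 s))) 0 t - RInt (fun s => G i (fun j => picX G x0 j (Rmax 0 s))) 0 t) - 0) by ring.
    eapply Rle_trans. apply abs3. rewrite Rabs_R0.
    pose proof (pow_lt (/2) n ltac:(lra)). pose proof (Rabs_pos t).
    assert (C * / 2 * (/ 2) ^ n <= C * (/2)^n) by nra.
    replace ((C + 3 * L * C * Rabs t) * (/ 2) ^ n) with (C * (/2)^n + 3 * L * (C * (/ 2) ^ n) * Rabs t) by ring.
    lra. }
  revert H. unfold Rabs; destruct Rcase_abs; lra.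
Qed.

Theorem picard G L M x0 : 0 < L -> 0 <= M -> lipG G L -> bndG G M ->
  exists (X : nat -> R -> R), (forall i, (i < 3)%nat -> X i 0 = x0 i) /\
    forall i t, (i < 3)%nat -> 0 <= t -> is_derive (X i) t (G i (fun j => X j t)).
Proof.
  intros HL0 HM HL HB. exists (picX G x0). split.
  - intros; apply (picX_0 G L M); auto.
  - intros i t Hi Ht.
    apply (is_derive_ext (fun t => x0 i + RInt (fun s => G i (fun j => picX G x0 j (Rmax 0 s))) 0 t)).
    { intros; symmetry; apply (picX_int G L M); auto. }
    assert (Hd : is_derive (fun t => RInt (fun s => G i (fun j => picX G x0 j (Rmax 0 s))) 0 t) t
                 (G i (fun j => picX G x0 j (Rmax 0 t)))).
    { apply (is_derive_RInt (fun s => G i (fun j => picX G x0 j (Rmax 0 s))) _ 0).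
      + apply filter_forall. intros b. apply (@RInt_correct R_CompleteNormedModule). apply exRI. apply (picX_cont G L M); auto.
      + apply (picX_cont G L M); auto. }
    pose proof (is_derive_plus (K:=R_AbsRing) (V:=R_NormedModule) (fun _ => x0 i) _ t zero _ (is_derive_const _ _) Hd) as H.
    rewrite Rmax_right in H by lra. unfold plus, zero in H; simpl in H. rewrite Rplus_0_l in H. exact H.
Qed.

Lemma der_cont_pt (W : R -> R) x l : is_derive W x l -> continuity_pt W x.
Proof.
  intros H. apply continuity_pt_filterlim. apply (ex_derive_continuous (V:=R_NormedModule)). exists l; auto.
Qed.

Lemma der_eps (W : R -> R) x l : is_derive W x l ->
  forall eps, 0 < eps -> exists d, 0 < d /\ forall r, Rabs (r - x) < d -> Rabs (W r - W x) < eps.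
Proof.
  intros H eps He. pose proof (der_cont_pt W x l H) as Hc.
  unfold continuity_pt, continue_in, limit1_in, limit_in in Hc; simpl in Hc.
  destruct (Hc eps He) as [d [Hd Hr]]. exists d. split; auto. intros r Hrr.
  destruct (Req_dec r x). subst. rewrite Rminus_diag, Rabs_R0; lra.
  apply Hr. split. split; auto. exact I. apply Hrr.
Qed.

Lemma mvt_le (W dW : R -> R) a b k : a <= b -> (forall x, a <= x <= b -> is_derive W x (dW x)) ->
  (forall x, a <= x <= b -> dW x <= k) -> W b - W a <= k * (b - a).
Proof.
  intros Hab Hd Hk. destruct (MVT_gen W a b dW) as [c [Hc Heq]].
  - intros x Hx. rewrite Rmin_left, Rmax_right in Hx by lra. apply Hd; lra.
  - intros x Hx. rewrite Rmin_left, Rmax_right in Hx by lra. apply (der_cont_pt _ _ (dW x)). apply Hd; lra.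
  - rewrite Rmin_left, Rmax_right in Hc by lra. rewrite Heq. apply Rmult_le_compat_r; [lra|]. apply Hk; lra.
Qed.

Lemma mvt_ge (W dW : R -> R) a b k : a <= b -> (forall x, a <= x <= b -> is_derive W x (dW x)) ->
  (forall x, a <= x <= b -> k <= dW x) -> k * (b - a) <= W b - W a.
Proof.
  intros Hab Hd Hk. destruct (MVT_gen W a b dW) as [c [Hc Heq]].
  - intros x Hx. rewrite Rmin_left, Rmax_right in Hx by lra. apply Hd; lra.
  - intros x Hx. rewrite Rmin_left, Rmax_right in Hx by lra. apply (der_cont_pt _ _ (dW x)). apply Hd; lra.
  - rewrite Rmin_left, Rmax_right in Hc by lra. rewrite Heq. apply Rmult_le_compat_r; [lra|]. apply Hk; lra.
Qed.

Lemma barrier (W dW : R -> R) m : (forall t, 0 <= t -> is_derive W t (dW t)) -> W 0 < m ->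
  (forall t, 0 <= t -> W t < m -> dW t <= 0) -> forall t, 0 <= t -> W t <= W 0.
Proof.
  intros Hd H0 Hn t1 Ht1.
  set (E := fun s => 0 <= s <= t1 /\ forall r, 0 <= r <= s -> W r < m).
  assert (HEb : bound E). { exists t1. intros s [Hs _]. lra. }
  assert (HE0 : E 0). { split. lra. intros r Hr. replace r with 0 by lra. auto. }
  destruct (completeness E HEb (ex_intro _ 0 HE0)) as [s Hs].
  destruct Hs as [Hub Hlub].
  assert (Hs0 : 0 <= s) by (apply Hub; auto).
  assert (Hs1 : s <= t1) by (apply Hlub; intros x [Hx _]; lra).
  assert (Ha : forall r, 0 <= r < s -> W r < m).
  { intros r Hr. destruct (classic (exists s', E s' /\ r < s')) as [[s' [[_ Hs'] Hrs]]|Hno].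
    - apply Hs'; lra.
    - exfalso. assert (s <= r). { apply Hlub. intros x Hx. destruct (Rle_dec x r); auto. exfalso; apply Hno. exists x; split; auto; lra. }
      lra. }
  assert (Hb : forall r, 0 <= r < s -> W r <= W 0).
  { intros r Hr. pose proof (mvt_le W dW 0 r 0 ltac:(lra)). assert (W r - W 0 <= 0 * (r - 0)).
    apply H. intros; apply Hd; lra. intros x Hx. apply Hn. lra. apply Ha; lra. lra. }
  assert (Hc : W s <= W 0).
  { destruct (Rle_dec (W s) (W 0)) as [|Hgt]; auto. exfalso.
    destruct (Req_dec s 0). subst; lra.
    destruct (der_eps W s (dW s) (Hd s Hs0) (W s - W 0) ltac:(lra)) as [d [Hd0 Hdd]].
    set (r := Rmax 0 (s - d / 2)).
    assert (Hr : 0 <= r < s) by (unfold r, Rmax; destruct Rle_dec; lra).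
    specialize (Hdd r). assert (Hrs : Rabs (r - s) < d) by (unfold r, Rmax; destruct Rle_dec; unfold Rabs; destruct Rcase_abs; lra).
    specialize (Hdd Hrs). specialize (Hb r Hr). revert Hdd. unfold Rabs; destruct Rcase_abs; lra. }
  assert (Hst : s = t1).
  { destruct (Req_dec s t1); auto. exfalso.
    destruct (der_eps W s (dW s) (Hd s Hs0) (m - W s) ltac:(lra)) as [d [Hd0 Hdd]].
    set (s' := Rmin t1 (s + d / 2)).
    assert (E s').
    { split. unfold s', Rmin; destruct Rle_dec; lra.
      intros r Hr. destruct (Rlt_dec r s). apply Ha; lra.
      specialize (Hdd r). assert (Hrs : Rabs (r - s) < d).
      { unfold s', Rmin in Hr; destruct Rle_dec in Hr; unfold Rabs; destruct Rcase_abs; lra. }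
      specialize (Hdd Hrs). revert Hdd; unfold Rabs; destruct Rcase_abs; lra. }
    apply Hub in H1. unfold s', Rmin in H1; destruct Rle_dec in H1; lra. }
  subst. auto.
Qed.

Lemma lyap_generic (W dW p : R -> R) l1 l2 c m :
  0 < l1 -> 0 < l2 -> 0 < c -> 0 < m ->
  (forall t, 0 <= t -> is_derive W t (dW t)) ->
  (forall t, 0 <= t -> l1 * p t <= W t) -> (forall t, 0 <= t -> W t <= l2 * p t) ->
  (forall t, 0 <= t -> 0 <= p t) ->
  (forall t, 0 <= t -> p t < m -> dW t <= - c * p t) ->
  W 0 < l1 * m ->
  (forall t, 0 <= t -> W t <= W 0) /\ (forall eta, 0 < eta -> exists T, forall t, T <= t -> W t < eta).
Proof.
  intros Hl1 Hl2 Hc Hm Hd Hlo Hhi Hp Hdw H0.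
  assert (Hneg : forall t, 0 <= t -> W t < l1 * m -> dW t <= - c * p t).
  { intros t Ht HW. apply Hdw; auto. apply Rmult_lt_reg_l with l1; auto. specialize (Hlo t Ht). lra. }
  assert (Hb : forall t, 0 <= t -> W t <= W 0).
  { apply (barrier W dW (l1 * m)); auto. intros t Ht HW. specialize (Hneg t Ht HW). specialize (Hp t Ht). nra. }
  split; auto.
  assert (Hall : forall t, 0 <= t -> dW t <= - c * p t) by (intros; apply Hneg; auto; specialize (Hb t H); lra).
  assert (Hmono : forall a b, 0 <= a <= b -> W b <= W a).
  { intros a b Hab. assert (W b - W a <= 0 * (b - a)). apply (mvt_le W dW). lra. intros; apply Hd; lra.
    intros x Hx. specialize (Hall x ltac:(lra)). specialize (Hp x ltac:(lra)). nra. lra. }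
  intros eta Heta.
  set (T := W 0 * l2 / (c * eta) + 1).
  assert (HW0 : 0 <= W 0) by (specialize (Hlo 0 ltac:(lra)); specialize (Hp 0 ltac:(lra)); nra).
  assert (HT : 0 < T) by (unfold T; assert (0 <= W 0 * l2 / (c * eta)) by (apply Rmult_le_pos; [nra| left; apply Rinv_0_lt_compat; nra]); lra).
  destruct (classic (exists t0, 0 <= t0 <= T /\ W t0 < eta)) as [[t0 [Ht0 Hw0]]|Hno].
  - exists T. intros t Ht. specialize (Hmono t0 t ltac:(lra)). lra.
  - exfalso.
    assert (Hge : forall t, 0 <= t <= T -> eta <= W t).
    { intros t Ht. destruct (Rle_dec eta (W t)); auto. exfalso; apply Hno; exists t; split; auto; lra. }
    assert (W T - W 0 <= (- c * eta / l2) * (T - 0)).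
    { apply (mvt_le W dW). lra. intros; apply Hd; lra.
      intros x Hx. specialize (Hall x ltac:(lra)). specialize (Hge x Hx). specialize (Hhi x ltac:(lra)).
      assert (eta / l2 <= p x). { apply Rmult_le_reg_l with l2; auto. unfold Rdiv. field_simplify; lra. }
      unfold Rdiv in *. nra. }
    specialize (Hlo T ltac:(lra)). specialize (Hp T ltac:(lra)).
    assert (- c * eta / l2 * (T - 0) = - (W 0) - c * eta / l2).
    { unfold T. field. split; lra. }
    assert (0 < c * eta / l2) by (apply Rdiv_lt_0_compat; nra).
    nra.
Qed.

Lemma chetaev (W dW p : R -> R) l2 c B :
  0 < l2 -> 0 < c ->
  (forall t, 0 <= t -> is_derive W t (dW t)) ->
  (forall t, 0 <= t -> W t <= l2 * p t) -> (forall t, 0 <= t -> 0 <= p t) ->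
  (forall t, 0 <= t -> c * p t <= dW t) -> (forall t, 0 <= t -> p t <= B) ->
  0 < W 0 -> False.
Proof.
  intros Hl2 Hc Hd Hhi Hp Hdw HB H0.
  assert (Hinc : forall t, 0 <= t -> W 0 <= W t).
  { intros t Ht. assert (0 * (t - 0) <= W t - W 0). apply (mvt_ge W dW). lra. intros; apply Hd; lra.
    intros x Hx. specialize (Hdw x ltac:(lra)). specialize (Hp x ltac:(lra)). nra. lra. }
  set (k := c * W 0 / l2).
  assert (Hk : 0 < k) by (unfold k; apply Rdiv_lt_0_compat; nra).
  assert (Hg : forall t, 0 <= t -> k * (t - 0) <= W t - W 0).
  { intros t Ht. apply (mvt_ge W dW). lra. intros; apply Hd; lra.
    intros x Hx. specialize (Hdw x ltac:(lra)). specialize (Hinc x ltac:(lra)). specialize (Hhi x ltac:(lra)).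
    assert (W 0 / l2 <= p x). { apply Rmult_le_reg_l with l2; auto. unfold Rdiv. field_simplify; lra. }
    unfold k. unfold Rdiv in *. nra. }
  set (T := (Rabs (l2 * B) + 1) / k).
  assert (HT : 0 < T) by (unfold T; apply Rdiv_lt_0_compat; [pose proof (Rabs_pos (l2 * B)); lra|lra]).
  specialize (Hg T ltac:(lra)). specialize (HB T ltac:(lra)). specialize (Hhi T ltac:(lra)).
  assert (k * (T - 0) = Rabs (l2 * B) + 1) by (unfold T; field; lra).
  pose proof (Rle_abs (l2 * B)). nra.
Qed.

Definition Dt b11 b12 b21 b22 := b11 * b22 - b12 * b21.
Definition Xf b11 b12 b21 b22 N y :=
  Dt b11 b12 b21 b22 * (N ^ 2 + y ^ 2) + (b22 * N - b12 * y) ^ 2 + (b11 * y - b21 * N) ^ 2.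
Definition X1 b11 b12 b21 b22 N y :=
  Dt b11 b12 b21 b22 * N + b22 * (b22 * N - b12 * y) - b21 * (b11 * y - b21 * N).
Definition X2 b11 b12 b21 b22 N y :=
  Dt b11 b12 b21 b22 * y - b12 * (b22 * N - b12 * y) + b11 * (b11 * y - b21 * N).
Definition Xm b11 b12 b21 b22 :=
  Rabs (- b12 * b22 - b11 * b21) + Rabs (Dt b11 b12 b21 b22 + b12 ^ 2 + b11 ^ 2).

Lemma X_ident b11 b12 b21 b22 N y :
  X1 b11 b12 b21 b22 N y * (b11 * N + b12 * y) + X2 b11 b12 b21 b22 N y * (b21 * N + b22 * y)
  = (b11 + b22) * Dt b11 b12 b21 b22 * (N ^ 2 + y ^ 2).
Proof. unfold X1, X2, Dt. ring. Qed.

Lemma X2_bound b11 b12 b21 b22 N y :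
  Rabs (X2 b11 b12 b21 b22 N y) <= Xm b11 b12 b21 b22 * (Rabs N + Rabs y).
Proof.
  unfold Xm. replace (X2 b11 b12 b21 b22 N y) with ((- b12 * b22 - b11 * b21) * N + (Dt b11 b12 b21 b22 + b12 ^ 2 + b11 ^ 2) * y)
    by (unfold X2, Dt; ring).
  set (c1 := - b12 * b22 - b11 * b21). set (c2 := Dt b11 b12 b21 b22 + b12 ^ 2 + b11 ^ 2).
  eapply Rle_trans. apply Rabs_triang. rewrite !Rabs_mult.
  pose proof (Rabs_pos c1). pose proof (Rabs_pos c2). pose proof (Rabs_pos N). pose proof (Rabs_pos y). nra.
Qed.

Lemma Xm_pos b11 b12 b21 b22 : 0 <= Xm b11 b12 b21 b22.
Proof. unfold Xm. pose proof (Rabs_pos (- b12 * b22 - b11 * b21)). pose proof (Rabs_pos (Dt b11 b12 b21 b22 + b12 ^ 2 + b11 ^ 2)). lra. Qed.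

Lemma Xf_lower b11 b12 b21 b22 N y : Dt b11 b12 b21 b22 * (N ^ 2 + y ^ 2) <= Xf b11 b12 b21 b22 N y.
Proof. unfold Xf. pose proof (pow2_ge_0 (b22 * N - b12 * y)). pose proof (pow2_ge_0 (b11 * y - b21 * N)). lra. Qed.

Definition Bs b11 b12 b21 b22 := Rabs (Dt b11 b12 b21 b22) + b11 ^ 2 + b12 ^ 2 + b21 ^ 2 + b22 ^ 2.

Lemma Xf_upper b11 b12 b21 b22 N y : Xf b11 b12 b21 b22 N y <= Bs b11 b12 b21 b22 * (N ^ 2 + y ^ 2).
Proof.
  unfold Xf, Bs. pose proof (Rle_abs (Dt b11 b12 b21 b22)).
  assert (E1 : (b22 ^ 2 + b12 ^ 2) * (N ^ 2 + y ^ 2) - (b22 * N - b12 * y) ^ 2 = (b22 * y + b12 * N) ^ 2) by ring.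
  assert (E2 : (b11 ^ 2 + b21 ^ 2) * (N ^ 2 + y ^ 2) - (b11 * y - b21 * N) ^ 2 = (b11 * N + b21 * y) ^ 2) by ring.
  pose proof (pow2_ge_0 (b22 * y + b12 * N)). pose proof (pow2_ge_0 (b11 * N + b21 * y)).
  assert (0 <= N ^ 2 + y ^ 2) by (pose proof (pow2_ge_0 N); pose proof (pow2_ge_0 y); lra).
  assert (Dt b11 b12 b21 b22 * (N ^ 2 + y ^ 2) <= Rabs (Dt b11 b12 b21 b22) * (N ^ 2 + y ^ 2)) by (apply Rmult_le_compat_r; auto).
  nra.
Qed.

Lemma sq3 N y z : (Rabs N + Rabs y) * (Rabs N + Rabs y + Rabs z) <= 3 * (N ^ 2 + y ^ 2 + z ^ 2).
Proof.
  rewrite <- (pow2_abs N), <- (pow2_abs y), <- (pow2_abs z).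
  pose proof (Rabs_pos N). pose proof (Rabs_pos y). pose proof (Rabs_pos z).
  set (a := Rabs N) in *. set (b := Rabs y) in *. set (c := Rabs z) in *.
  pose proof (pow2_ge_0 (a - b)). pose proof (pow2_ge_0 (a - c)). pose proof (pow2_ge_0 (b - c)). nra.
Qed.

Lemma cross_bound a bb y z : 0 < a -> 2 * bb * z * y <= bb ^ 2 / a * y ^ 2 + a * z ^ 2.
Proof.
  intros Ha. apply Rmult_le_reg_l with a; auto.
  replace (a * (bb ^ 2 / a * y ^ 2 + a * z ^ 2)) with (bb ^ 2 * y ^ 2 + a ^ 2 * z ^ 2) by (field; lra).
  pose proof (pow2_ge_0 (bb * y - a * z)). nra.
Qed.

Lemma nonlin_bound K X e Xmv Ce rho N y z : 0 <= K -> 0 <= Xmv -> 0 <= Ce -> 0 <= rho ->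
  Rabs X <= Xmv * (Rabs N + Rabs y) -> Rabs e <= Ce * rho * (Rabs N + Rabs y + Rabs z) ->
  2 * K * X * e <= 6 * K * Xmv * Ce * rho * (N ^ 2 + y ^ 2 + z ^ 2).
Proof.
  intros HK HX HC Hr HXb Heb.
  assert (X * e <= Rabs X * Rabs e) by (rewrite <- Rabs_mult; apply Rle_abs).
  pose proof (Rabs_pos X). pose proof (Rabs_pos e). pose proof (Rabs_pos N). pose proof (Rabs_pos y). pose proof (Rabs_pos z).
  assert (Rabs X * Rabs e <= (Xmv * (Rabs N + Rabs y)) * (Ce * rho * (Rabs N + Rabs y + Rabs z))).
  { apply Rmult_le_compat; auto. }
  pose proof (sq3 N y z).
  assert (0 <= Xmv * Ce * rho) by (apply Rmult_le_pos; [apply Rmult_le_pos|]; auto).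
  assert ((Xmv * (Rabs N + Rabs y)) * (Ce * rho * (Rabs N + Rabs y + Rabs z)) <= Xmv * Ce * rho * (3 * (N ^ 2 + y ^ 2 + z ^ 2))).
  { replace ((Xmv * (Rabs N + Rabs y)) * (Ce * rho * (Rabs N + Rabs y + Rabs z))) with
      (Xmv * Ce * rho * ((Rabs N + Rabs y) * (Rabs N + Rabs y + Rabs z))) by ring.
    apply Rmult_le_compat_l; auto. }
  assert (2 * K * X * e <= 2 * K * (Xmv * Ce * rho * (3 * (N ^ 2 + y ^ 2 + z ^ 2)))).
  { replace (2 * K * X * e) with (2 * K * (X * e)) by ring. apply Rmult_le_compat_l; lra. }
  lra.
Qed.

Definition KA b11 b12 b21 b22 a bb := bb ^ 2 / (a * Dt b11 b12 b21 b22 * (- (b11 + b22))) + 1.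

Lemma lemmaA b11 b12 b21 b22 a bb Ce rho N y z e :
  0 < Dt b11 b12 b21 b22 -> 0 < - (b11 + b22) -> 0 < a -> 0 <= Ce -> 0 <= rho ->
  12 * KA b11 b12 b21 b22 a bb * Xm b11 b12 b21 b22 * Ce * rho <=
     Rmin (KA b11 b12 b21 b22 a bb * Dt b11 b12 b21 b22 * (- (b11 + b22))) a ->
  Rabs e <= Ce * rho * (Rabs N + Rabs y + Rabs z) ->
  KA b11 b12 b21 b22 a bb * (2 * (X1 b11 b12 b21 b22 N y * (b11 * N + b12 * y) +
                X2 b11 b12 b21 b22 N y * (b21 * N + b22 * y + e))) + 2 * z * (bb * y - a * z)
  <= - (Rmin (KA b11 b12 b21 b22 a bb * Dt b11 b12 b21 b22 * (- (b11 + b22))) a / 2) * (N ^ 2 + y ^ 2 + z ^ 2).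
Proof.
  intros HD HT Ha HC Hr Hrho He.
  set (D := Dt b11 b12 b21 b22) in *. set (T := - (b11 + b22)) in *. set (K := KA b11 b12 b21 b22 a bb) in *.
  assert (HK : K * D * T = bb ^ 2 / a + D * T).
  { unfold K, KA. fold D. fold T. field. repeat split; lra. }
  assert (HK0 : 0 < K). { unfold K, KA. fold D; fold T. assert (0 <= bb ^ 2 / (a * D * T)). apply Rmult_le_pos. apply pow2_ge_0. left; apply Rinv_0_lt_compat. apply Rmult_lt_0_compat; [apply Rmult_lt_0_compat|]; lra. lra. }
  replace (K * (2 * (X1 b11 b12 b21 b22 N y * (b11 * N + b12 * y) + X2 b11 b12 b21 b22 N y * (b21 * N + b22 * y + e))) + 2 * z * (bb * y - a * z))
    with (K * (2 * ((X1 b11 b12 b21 b22 N y * (b11 * N + b12 * y) + X2 b11 b12 b21 b22 N y * (b21 * N + b22 * y))))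
          + 2 * K * X2 b11 b12 b21 b22 N y * e + 2 * bb * z * y - 2 * a * z ^ 2) by ring.
  rewrite X_ident. fold D.
  pose proof (cross_bound a bb y z Ha).
  pose proof (nonlin_bound K (X2 b11 b12 b21 b22 N y) e (Xm b11 b12 b21 b22) Ce rho N y z ltac:(lra) (Xm_pos _ _ _ _) HC Hr (X2_bound _ _ _ _ N y) He).
  set (cl := Rmin (K * D * T) a) in *.
  assert (Hcl1 : cl <= K * D * T) by apply Rmin_l. assert (Hcl2 : cl <= a) by apply Rmin_r.
  assert (Hcl0 : 0 < cl). { unfold cl. apply Rmin_case; auto. rewrite HK. assert (0 <= bb ^ 2 / a) by (apply Rmult_le_pos; [apply pow2_ge_0| left; apply Rinv_0_lt_compat; lra]). nra. }
  assert (6 * K * Xm b11 b12 b21 b22 * Ce * rho * (N ^ 2 + y ^ 2 + z ^ 2) <= cl / 2 * (N ^ 2 + y ^ 2 + z ^ 2)).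
  { apply Rmult_le_compat_r. pose proof (pow2_ge_0 N); pose proof (pow2_ge_0 y); pose proof (pow2_ge_0 z); lra. lra. }
  assert (Hy : bb ^ 2 / a * y ^ 2 <= K * D * T * y ^ 2).
  { apply Rmult_le_compat_r. apply pow2_ge_0. rewrite HK. assert (0 < D * T) by nra. lra. }
  assert (cl * (N ^ 2 + y ^ 2) <= K * D * T * (N ^ 2 + y ^ 2)) by (apply Rmult_le_compat_r; [pose proof (pow2_ge_0 N); pose proof (pow2_ge_0 y); lra| auto]).
  assert (cl * z ^ 2 <= a * z ^ 2) by (apply Rmult_le_compat_r; [apply pow2_ge_0|auto]).
  replace (K * (2 * ((b11 + b22) * D * (N ^ 2 + y ^ 2)))) with (- 2 * (K * D * T) * (N ^ 2 + y ^ 2)) by (unfold T; ring).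
  assert (0 <= K * D * T * N ^ 2) by (apply Rmult_le_pos; [lra|apply pow2_ge_0]). lra.
Qed.

Lemma cross2 X Xmv zeta u N y al : 0 < al -> 0 <= Xmv -> Rabs X <= Xmv * (Rabs N + Rabs y) ->
  Rabs (2 * X * zeta * u) <= al * (N ^ 2 + y ^ 2) + 2 * Xmv ^ 2 * zeta ^ 2 * u ^ 2 / al.
Proof.
  intros Hal HX Hb.
  rewrite !Rabs_mult. rewrite (Rabs_right 2) by lra.
  pose proof (Rabs_pos X). pose proof (Rabs_pos zeta). pose proof (Rabs_pos u). pose proof (Rabs_pos N). pose proof (Rabs_pos y).
  assert (2 * Rabs X * Rabs zeta * Rabs u <= 2 * (Xmv * (Rabs N + Rabs y)) * Rabs zeta * Rabs u).
  { apply Rmult_le_compat_r; auto. apply Rmult_le_compat_r; auto. lra. }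
  set (s := Rabs N + Rabs y) in *. set (w := Xmv * Rabs zeta * Rabs u).
  assert (Hs : s ^ 2 <= 2 * (N ^ 2 + y ^ 2)).
  { unfold s. rewrite <- (pow2_abs N), <- (pow2_abs y). pose proof (pow2_ge_0 (Rabs N - Rabs y)). nra. }
  assert (2 * s * w <= al / 2 * s ^ 2 + 2 * w ^ 2 / al).
  { apply Rmult_le_reg_l with al; auto.
    replace (al * (al / 2 * s ^ 2 + 2 * w ^ 2 / al)) with (al ^ 2 / 2 * s ^ 2 + 2 * w ^ 2) by (field; lra).
    pose proof (pow2_ge_0 (al / 2 * s - w)). nra. }
  assert (w ^ 2 = Xmv ^ 2 * zeta ^ 2 * u ^ 2) by (unfold w; rewrite <- (pow2_abs zeta), <- (pow2_abs u); ring).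
  assert (al / 2 * s ^ 2 <= al * (N ^ 2 + y ^ 2)).
  { replace (al * (N ^ 2 + y ^ 2)) with (al / 2 * (2 * (N ^ 2 + y ^ 2))) by field. apply Rmult_le_compat_l; lra. }
  replace (2 * (Xmv * s) * Rabs zeta * Rabs u) with (2 * s * w) in H4 by (unfold w; ring).
  rewrite H6 in H5. unfold Rdiv in *. lra.
Qed.

Definition KB b11 b12 b21 b22 a zeta :=
  Xm b11 b12 b21 b22 ^ 2 * zeta ^ 2 / (a * Rabs (Dt b11 b12 b21 b22 * (- (b11 + b22)))) + 1.

Lemma lemmaB b11 b12 b21 b22 a zeta Ce rho N y u e :
  0 < Dt b11 b12 b21 b22 -> 0 < - (b11 + b22) -> 0 < a -> 0 <= Ce -> 0 <= rho ->
  12 * Xm b11 b12 b21 b22 * Ce * rho <= Rmin (Dt b11 b12 b21 b22 * (- (b11 + b22))) a ->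
  Rabs e <= Ce * rho * (Rabs N + Rabs y + Rabs u) ->
  2 * (X1 b11 b12 b21 b22 N y * (b11 * N + b12 * y) +
                X2 b11 b12 b21 b22 N y * (b21 * N + b22 * y + zeta * u + e)) + KB b11 b12 b21 b22 a zeta * (2 * u * (- a * u))
  <= - (Rmin (Dt b11 b12 b21 b22 * (- (b11 + b22))) a / 2) * (N ^ 2 + y ^ 2 + u ^ 2).
Proof.
  intros HD HT Ha HC Hr Hrho He.
  set (D := Dt b11 b12 b21 b22) in *. set (T := - (b11 + b22)) in *. set (K := KB b11 b12 b21 b22 a zeta) in *.
  set (al := D * T) in *.
  assert (Hal : 0 < al) by (unfold al; nra).
  assert (HK : 2 * K * a = 2 * Xm b11 b12 b21 b22 ^ 2 * zeta ^ 2 / al + 2 * a).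
  { unfold K, KB. fold D. fold T. fold al. rewrite Rabs_right by lra. field. split; lra. }
  replace (2 * (X1 b11 b12 b21 b22 N y * (b11 * N + b12 * y) + X2 b11 b12 b21 b22 N y * (b21 * N + b22 * y + zeta * u + e)) + K * (2 * u * (- a * u)))
    with (2 * ((X1 b11 b12 b21 b22 N y * (b11 * N + b12 * y) + X2 b11 b12 b21 b22 N y * (b21 * N + b22 * y)))
          + 2 * X2 b11 b12 b21 b22 N y * zeta * u + 2 * 1 * X2 b11 b12 b21 b22 N y * e - (2 * K * a) * u ^ 2) by ring.
  rewrite X_ident. fold D. rewrite HK.
  pose proof (cross2 (X2 b11 b12 b21 b22 N y) (Xm b11 b12 b21 b22) zeta u N y al Hal (Xm_pos _ _ _ _) (X2_bound _ _ _ _ N y)) as Hc.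
  pose proof (Rle_abs (2 * X2 b11 b12 b21 b22 N y * zeta * u)).
  pose proof (nonlin_bound 1 (X2 b11 b12 b21 b22 N y) e (Xm b11 b12 b21 b22) Ce rho N y u ltac:(lra) (Xm_pos _ _ _ _) HC Hr (X2_bound _ _ _ _ N y) He).
  set (cl := Rmin al a) in *.
  assert (Hcl1 : cl <= al) by apply Rmin_l. assert (Hcl2 : cl <= a) by apply Rmin_r.
  assert (Hcl0 : 0 < cl) by (unfold cl; apply Rmin_case; lra).
  assert (6 * 1 * Xm b11 b12 b21 b22 * Ce * rho * (N ^ 2 + y ^ 2 + u ^ 2) <= cl / 2 * (N ^ 2 + y ^ 2 + u ^ 2)).
  { apply Rmult_le_compat_r. pose proof (pow2_ge_0 N); pose proof (pow2_ge_0 y); pose proof (pow2_ge_0 u); lra. lra. }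
  assert (cl * (N ^ 2 + y ^ 2) <= al * (N ^ 2 + y ^ 2)) by (apply Rmult_le_compat_r; [pose proof (pow2_ge_0 N); pose proof (pow2_ge_0 y); lra| auto]).
  assert (cl * u ^ 2 <= a * u ^ 2) by (apply Rmult_le_compat_r; [apply pow2_ge_0|auto]).
  assert (0 <= a * u ^ 2) by (apply Rmult_le_pos; [lra|apply pow2_ge_0]).
  replace (2 * ((b11 + b22) * D * (N ^ 2 + y ^ 2))) with (- 2 * al * (N ^ 2 + y ^ 2)) by (unfold al, T; ring).
  lra.
Qed.

Lemma lemmaC b11 b12 b21 b22 a zeta Ce rho N y u e :
  Dt b11 b12 b21 b22 < 0 -> 0 < - (b11 + b22) -> 0 < a -> 0 <= Ce -> 0 <= rho ->
  12 * Xm b11 b12 b21 b22 * Ce * rho <= Rmin (- Dt b11 b12 b21 b22 * (- (b11 + b22))) a ->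
  Rabs e <= Ce * rho * (Rabs N + Rabs y + Rabs u) ->
  (Rmin (- Dt b11 b12 b21 b22 * (- (b11 + b22))) a / 2) * (N ^ 2 + y ^ 2 + u ^ 2) <=
  2 * (X1 b11 b12 b21 b22 N y * (b11 * N + b12 * y) +
                X2 b11 b12 b21 b22 N y * (b21 * N + b22 * y + zeta * u + e)) - KB b11 b12 b21 b22 a zeta * (2 * u * (- a * u)).
Proof.
  intros HD HT Ha HC Hr Hrho He.
  set (D := Dt b11 b12 b21 b22) in *. set (T := - (b11 + b22)) in *. set (K := KB b11 b12 b21 b22 a zeta) in *.
  set (al := - D * T) in *.
  assert (Hal : 0 < al) by (unfold al; nra).
  assert (HK : 2 * K * a = 2 * Xm b11 b12 b21 b22 ^ 2 * zeta ^ 2 / al + 2 * a).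
  { unfold K, KB. fold D. fold T. rewrite Rabs_left by nra. unfold al. field. split; lra. }
  replace (2 * (X1 b11 b12 b21 b22 N y * (b11 * N + b12 * y) + X2 b11 b12 b21 b22 N y * (b21 * N + b22 * y + zeta * u + e)) - K * (2 * u * (- a * u)))
    with (2 * ((X1 b11 b12 b21 b22 N y * (b11 * N + b12 * y) + X2 b11 b12 b21 b22 N y * (b21 * N + b22 * y)))
          + 2 * X2 b11 b12 b21 b22 N y * zeta * u - (- 2 * 1 * X2 b11 b12 b21 b22 N y * e) + (2 * K * a) * u ^ 2) by ring.
  rewrite X_ident. fold D. rewrite HK.
  pose proof (cross2 (X2 b11 b12 b21 b22 N y) (Xm b11 b12 b21 b22) zeta u N y al Hal (Xm_pos _ _ _ _) (X2_bound _ _ _ _ N y)) as Hc.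
  pose proof (Rle_abs (- (2 * X2 b11 b12 b21 b22 N y * zeta * u))). rewrite Rabs_Ropp in H.
  assert (He' : Rabs (- e) <= Ce * rho * (Rabs N + Rabs y + Rabs u)) by (rewrite Rabs_Ropp; auto).
  pose proof (nonlin_bound 1 (X2 b11 b12 b21 b22 N y) (- e) (Xm b11 b12 b21 b22) Ce rho N y u ltac:(lra) (Xm_pos _ _ _ _) HC Hr (X2_bound _ _ _ _ N y) He').
  set (cl := Rmin al a) in *.
  assert (Hcl1 : cl <= al) by apply Rmin_l. assert (Hcl2 : cl <= a) by apply Rmin_r.
  assert (Hcl0 : 0 < cl) by (unfold cl; apply Rmin_case; lra).
  assert (6 * 1 * Xm b11 b12 b21 b22 * Ce * rho * (N ^ 2 + y ^ 2 + u ^ 2) <= cl / 2 * (N ^ 2 + y ^ 2 + u ^ 2)).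
  { apply Rmult_le_compat_r. pose proof (pow2_ge_0 N); pose proof (pow2_ge_0 y); pose proof (pow2_ge_0 u); lra. lra. }
  assert (cl * (N ^ 2 + y ^ 2) <= al * (N ^ 2 + y ^ 2)) by (apply Rmult_le_compat_r; [pose proof (pow2_ge_0 N); pose proof (pow2_ge_0 y); lra| auto]).
  assert (cl * u ^ 2 <= a * u ^ 2) by (apply Rmult_le_compat_r; [apply pow2_ge_0|auto]).
  assert (0 <= a * u ^ 2) by (apply Rmult_le_pos; [lra|apply pow2_ge_0]).
  replace (2 * ((b11 + b22) * D * (N ^ 2 + y ^ 2))) with (2 * al * (N ^ 2 + y ^ 2)) by (unfold al, T; ring).
  replace (- 2 * 1 * X2 b11 b12 b21 b22 N y * e) with (2 * 1 * X2 b11 b12 b21 b22 N y * (- e)) by ring.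
  lra.
Qed.

Lemma Dval (f : R -> R) (t a b : R) : is_derive f t a -> a = b -> is_derive f t b.
Proof. intros H ->; auto. Qed.
Lemma Dplus (f g : R -> R) (t a b : R) : is_derive f t a -> is_derive g t b -> is_derive (fun s => f s + g s) t (a + b).
Proof. intros. apply (is_derive_plus (K:=R_AbsRing) (V:=R_NormedModule)); auto. Qed.
Lemma Dminus (f g : R -> R) (t a b : R) : is_derive f t a -> is_derive g t b -> is_derive (fun s => f s - g s) t (a - b).
Proof. intros. apply (is_derive_minus (K:=R_AbsRing) (V:=R_NormedModule)); auto. Qed.
Lemma Dscal (f : R -> R) (k t a : R) : is_derive f t a -> is_derive (fun s => k * f s) t (k * a).
Proof. intros. apply is_derive_scal; auto. Qed.
Lemma Dmul (f g : R -> R) (t a b : R) : is_derive f t a -> is_derive g t b -> is_derive (fun s => f s * g s) t (a * g t + f t * b).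
Proof. intros. apply (is_derive_mult f g t a b); auto. intros; apply Rmult_comm. Qed.
Lemma Dconst (k t : R) : is_derive (fun _ => k) t 0.
Proof. apply (is_derive_const (K:=R_AbsRing) (V:=R_NormedModule)). Qed.
Lemma Dsq (f : R -> R) (t a : R) : is_derive f t a -> is_derive (fun s => f s ^ 2) t (2 * f t * a).
Proof.
  intros H. apply (is_derive_ext (fun s => f s * f s)). intros s; simpl; ring.
  eapply Dval. apply Dmul; eauto. ring.
Qed.

Record L9 := mkL9 {l11:R; l12:R; l13:R; l21:R; l22:R; l23:R; l31:R; l32:R; l33:R}.
Definition cc1 L x y z := l11 L * x + l12 L * y + l13 L * z.
Definition cc2 L x y z := l21 L * x + l22 L * y + l23 L * z.
Definition cc3 L x y z := l31 L * x + l32 L * y + l33 L * z.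
Definition pc L x y z := cc1 L x y z ^ 2 + cc2 L x y z ^ 2 + cc3 L x y z ^ 2.

Record Q6 := mkQ6 {q11:R; q22:R; q33:R; q12:R; q13:R; q23:R}.
Definition qv Q a b c := q11 Q * a ^ 2 + q22 Q * b ^ 2 + q33 Q * c ^ 2 + 2 * q12 Q * a * b + 2 * q13 Q * a * c + 2 * q23 Q * b * c.
Definition qd Q a b c da db dc := 2 * ((q11 Q * a + q12 Q * b + q13 Q * c) * da + (q12 Q * a + q22 Q * b + q23 Q * c) * db
  + (q13 Q * a + q23 Q * b + q33 Q * c) * dc).

Definition Vq Q L x y z := qv Q (cc1 L x y z) (cc2 L x y z) (cc3 L x y z).
Definition Vd Q L x y z dx dy dz := qd Q (cc1 L x y z) (cc2 L x y z) (cc3 L x y z) (cc1 L dx dy dz) (cc2 L dx dy dz) (cc3 L dx dy dz).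

Lemma D_Vq Q L (x y z : R -> R) (xe ye ze t dx dy dz : R) :
  is_derive x t dx -> is_derive y t dy -> is_derive z t dz ->
  is_derive (fun s => Vq Q L (x s - xe) (y s - ye) (z s - ze)) t (Vd Q L (x t - xe) (y t - ye) (z t - ze) dx dy dz).
Proof.
  intros Hx Hy Hz.
  assert (Hx' : is_derive (fun s => x s - xe) t dx) by (eapply Dval; [apply Dminus; [apply Hx| apply Dconst]| ring]).
  assert (Hy' : is_derive (fun s => y s - ye) t dy) by (eapply Dval; [apply Dminus; [apply Hy| apply Dconst]| ring]).
  assert (Hz' : is_derive (fun s => z s - ze) t dz) by (eapply Dval; [apply Dminus; [apply Hz| apply Dconst]| ring]).
  assert (Hc : forall a b c, is_derive (fun s => a * (x s - xe) + b * (y s - ye) + c * (z s - ze)) t (a * dx + b * dy + c * dz)).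
  { intros. apply Dplus; [apply Dplus|]; apply Dscal; auto. }
  pose proof (Hc (l11 L) (l12 L) (l13 L)) as H1. pose proof (Hc (l21 L) (l22 L) (l23 L)) as H2.
  pose proof (Hc (l31 L) (l32 L) (l33 L)) as H3.
  unfold Vq, Vd, qv, qd, cc1, cc2, cc3.
  eapply Dval.
  apply Dplus; [apply Dplus; [apply Dplus; [apply Dplus; [apply Dplus|]|]|]|].
  - apply Dscal. apply Dsq. apply H1.
  - apply Dscal. apply Dsq. apply H2.
  - apply Dscal. apply Dsq. apply H3.
  - apply (is_derive_ext (fun s => (2 * q12 Q) * ((l11 L * (x s - xe) + l12 L * (y s - ye) + l13 L * (z s - ze)) * (l21 L * (x s - xe) + l22 L * (y s - ye) + l23 L * (z s - ze))))).
    intros s; simpl; ring. apply Dscal. apply Dmul. apply H1. apply H2.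
  - apply (is_derive_ext (fun s => (2 * q13 Q) * ((l11 L * (x s - xe) + l12 L * (y s - ye) + l13 L * (z s - ze)) * (l31 L * (x s - xe) + l32 L * (y s - ye) + l33 L * (z s - ze))))).
    intros s; simpl; ring. apply Dscal. apply Dmul. apply H1. apply H3.
  - apply (is_derive_ext (fun s => (2 * q23 Q) * ((l21 L * (x s - xe) + l22 L * (y s - ye) + l23 L * (z s - ze)) * (l31 L * (x s - xe) + l32 L * (y s - ye) + l33 L * (z s - ze))))).
    intros s; simpl; ring. apply Dscal. apply Dmul. apply H2. apply H3.
  - cbv beta. ring.
Qed.

Lemma pc_nonneg L x y z : 0 <= pc L x y z.
Proof. unfold pc. pose proof (pow2_ge_0 (cc1 L x y z)). pose proof (pow2_ge_0 (cc2 L x y z)). pose proof (pow2_ge_0 (cc3 L x y z)). lra. Qed.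

Definition QB Q l1 l2 := forall a b c, l1 * (a ^ 2 + b ^ 2 + c ^ 2) <= qv Q a b c /\ qv Q a b c <= l2 * (a ^ 2 + b ^ 2 + c ^ 2).

Lemma curve_lemma (g0 g1 g2 : R -> R -> R -> R) Se Ime Ise Q L l1 l2 c m
  (S Im Is dS dIm dIs : R -> R) :
  0 < l1 -> 0 < l2 -> 0 < c -> 0 < m -> QB Q l1 l2 ->
  (forall x y z, pc L x y z < m ->
     Vd Q L x y z (g0 (Se + x) (Ime + y) (Ise + z)) (g1 (Se + x) (Ime + y) (Ise + z)) (g2 (Se + x) (Ime + y) (Ise + z))
     <= - c * pc L x y z) ->
  (forall t, 0 <= t -> is_derive S t (dS t) /\ is_derive Im t (dIm t) /\ is_derive Is t (dIs t)) ->
  (forall t, 0 <= t -> pc L (S t - Se) (Im t - Ime) (Is t - Ise) < m ->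
     dS t = g0 (S t) (Im t) (Is t) /\ dIm t = g1 (S t) (Im t) (Is t) /\ dIs t = g2 (S t) (Im t) (Is t)) ->
  Vq Q L (S 0 - Se) (Im 0 - Ime) (Is 0 - Ise) < l1 * m ->
  (forall t, 0 <= t -> Vq Q L (S t - Se) (Im t - Ime) (Is t - Ise) <= Vq Q L (S 0 - Se) (Im 0 - Ime) (Is 0 - Ise)) /\
  (forall eta, 0 < eta -> exists T, forall t, T <= t -> Vq Q L (S t - Se) (Im t - Ime) (Is t - Ise) < eta).
Proof.
  intros Hl1 Hl2 Hc Hm HQ Hdec Hd Hf H0.
  apply (lyap_generic (fun t => Vq Q L (S t - Se) (Im t - Ime) (Is t - Ise))
           (fun t => Vd Q L (S t - Se) (Im t - Ime) (Is t - Ise) (dS t) (dIm t) (dIs t))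
           (fun t => pc L (S t - Se) (Im t - Ime) (Is t - Ise)) l1 l2 c m); auto.
  - intros t Ht. destruct (Hd t Ht) as [H1 [H2 H3]]. apply D_Vq; auto.
  - intros t Ht. unfold Vq, pc. apply HQ.
  - intros t Ht. unfold Vq, pc. apply HQ.
  - intros t Ht. apply pc_nonneg.
  - intros t Ht Hp. destruct (Hf t Ht Hp) as [E1 [E2 E3]]. rewrite E1, E2, E3.
    specialize (Hdec _ _ _ Hp).
    replace (Se + (S t - Se)) with (S t) in Hdec by ring.
    replace (Ime + (Im t - Ime)) with (Im t) in Hdec by ring.
    replace (Ise + (Is t - Ise)) with (Is t) in Hdec by ring. exact Hdec.
Qed.

Definition clampv e rb v := Rmax (e - rb) (Rmin (e + rb) v).

Lemma clamp_in e rb v : 0 <= rb -> Rabs (clampv e rb v - e) <= rb.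
Proof. intros. unfold clampv, Rmax, Rmin. repeat destruct Rle_dec; unfold Rabs; destruct Rcase_abs; lra. Qed.
Lemma clamp_id e rb v : Rabs (v - e) <= rb -> clampv e rb v = v.
Proof. intros H. unfold clampv, Rmax, Rmin. revert H. unfold Rabs. repeat destruct Rle_dec; destruct Rcase_abs; lra. Qed.
Lemma clamp_lip e rb v w : 0 <= rb -> Rabs (clampv e rb v - clampv e rb w) <= Rabs (v - w).
Proof. intros. unfold clampv, Rmax, Rmin. repeat destruct Rle_dec; unfold Rabs; repeat destruct Rcase_abs; lra. Qed.

Definition boxp Se Ime Ise rb S Im Is := Rabs (S - Se) <= rb /\ Rabs (Im - Ime) <= rb /\ Rabs (Is - Ise) <= rb.

Definition gLip (g : R -> R -> R -> R) Se Ime Ise rb Lg Mg :=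
  (forall S Im Is S' Im' Is', boxp Se Ime Ise rb S Im Is -> boxp Se Ime Ise rb S' Im' Is' ->
     Rabs (g S Im Is - g S' Im' Is') <= Lg * (Rabs (S - S') + Rabs (Im - Im') + Rabs (Is - Is'))) /\
  (forall S Im Is, boxp Se Ime Ise rb S Im Is -> Rabs (g S Im Is) <= Mg).

Definition gc (g : R -> R -> R -> R) Se Ime Ise rb S Im Is :=
  g (clampv Se rb S) (clampv Ime rb Im) (clampv Ise rb Is).

Lemma existence (g0 g1 g2 : R -> R -> R -> R) Se Ime Ise rb Lg Mg :
  0 <= rb -> 0 <= Lg -> 0 <= Mg ->
  gLip g0 Se Ime Ise rb Lg Mg -> gLip g1 Se Ime Ise rb Lg Mg -> gLip g2 Se Ime Ise rb Lg Mg ->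
  forall S0 Im0 Is0, exists S Im Is : R -> R, S 0 = S0 /\ Im 0 = Im0 /\ Is 0 = Is0 /\
    forall t, 0 <= t -> is_derive S t (gc g0 Se Ime Ise rb (S t) (Im t) (Is t)) /\
       is_derive Im t (gc g1 Se Ime Ise rb (S t) (Im t) (Is t)) /\ is_derive Is t (gc g2 Se Ime Ise rb (S t) (Im t) (Is t)).
Proof.
  intros Hrb HLg HMg H0 H1 H2 S0 Im0 Is0.
  set (G := fun (i : nat) (x : nat -> R) => match i with
      | O => gc g0 Se Ime Ise rb (x 0%nat) (x 1%nat) (x 2%nat)
      | S O => gc g1 Se Ime Ise rb (x 0%nat) (x 1%nat) (x 2%nat)
      | _ => gc g2 Se Ime Ise rb (x 0%nat) (x 1%nat) (x 2%nat) end).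
  set (x0 := fun i : nat => match i with O => S0 | S O => Im0 | _ => Is0 end).
  assert (Hb : forall x, boxp Se Ime Ise rb (clampv Se rb (x 0%nat)) (clampv Ime rb (x 1%nat)) (clampv Ise rb (x 2%nat))).
  { intros x. unfold boxp. repeat split; apply clamp_in; auto. }
  assert (Hgl : forall g, gLip g Se Ime Ise rb Lg Mg -> forall x y,
    Rabs (gc g Se Ime Ise rb (x 0%nat) (x 1%nat) (x 2%nat) - gc g Se Ime Ise rb (y 0%nat) (y 1%nat) (y 2%nat)) <=
    (Lg + 1) * (Rabs (x 0%nat - y 0%nat) + Rabs (x 1%nat - y 1%nat) + Rabs (x 2%nat - y 2%nat))).
  { intros g [Hl _] x y. unfold gc. pose proof (Hl _ _ _ _ _ _ (Hb x) (Hb y)) as Hxy.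
    pose proof (clamp_lip Se rb (x 0%nat) (y 0%nat) Hrb). pose proof (clamp_lip Ime rb (x 1%nat) (y 1%nat) Hrb).
    pose proof (clamp_lip Ise rb (x 2%nat) (y 2%nat) Hrb).
    pose proof (Rabs_pos (x 0%nat - y 0%nat)). pose proof (Rabs_pos (x 1%nat - y 1%nat)). pose proof (Rabs_pos (x 2%nat - y 2%nat)).
    pose proof (Rabs_pos (clampv Se rb (x 0%nat) - clampv Se rb (y 0%nat))).
    pose proof (Rabs_pos (clampv Ime rb (x 1%nat) - clampv Ime rb (y 1%nat))).
    pose proof (Rabs_pos (clampv Ise rb (x 2%nat) - clampv Ise rb (y 2%nat))).
    nra. }
  assert (Hlip : lipG G (Lg + 1)).
  { intros i x y. destruct i as [|[|i]]; simpl; apply Hgl; auto. }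
  assert (Hbnd : bndG G Mg).
  { intros i x. destruct i as [|[|i]]; simpl; unfold gc; [apply H0|apply H1|apply H2]; apply Hb. }
  destruct (picard G (Lg + 1) Mg x0 ltac:(lra) HMg Hlip Hbnd) as [X [HX0 HXd]].
  exists (X 0%nat), (X 1%nat), (X 2%nat). split; [|split; [|split]].
  - apply HX0; lia.
  - apply HX0; lia.
  - apply HX0; lia.
  - intros t Ht. split; [|split].
    + apply (HXd 0%nat t ltac:(lia) Ht).
    + apply (HXd 1%nat t ltac:(lia) Ht).
    + apply (HXd 2%nat t ltac:(lia) Ht).
Qed.

Definition d2 a b c a' b' c' := (a - a') ^ 2 + (b - b') ^ 2 + (c - c') ^ 2.

Lemma d2_nonneg a b c a' b' c' : 0 <= d2 a b c a' b' c'.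
Proof. unfold d2. pose proof (pow2_ge_0 (a - a')). pose proof (pow2_ge_0 (b - b')). pose proof (pow2_ge_0 (c - c')). lra. Qed.

Lemma dist3_sq a b c a' b' c' d : 0 < d -> dist3 a b c a' b' c' < d -> d2 a b c a' b' c' < d ^ 2.
Proof.
  intros Hd H. unfold dist3 in H. fold (d2 a b c a' b' c') in H.
  pose proof (d2_nonneg a b c a' b' c'). rewrite <- (pow2_sqrt (d2 a b c a' b' c')) by auto.
  pose proof (sqrt_pos (d2 a b c a' b' c')). nra.
Qed.

Lemma sq_dist3 a b c a' b' c' d : 0 < d -> d2 a b c a' b' c' < d ^ 2 -> dist3 a b c a' b' c' < d.
Proof.
  intros Hd H. unfold dist3. fold (d2 a b c a' b' c'). rewrite <- (sqrt_pow2 d) by lra.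
  apply sqrt_lt_1_alt. split; auto. apply d2_nonneg.
Qed.

Lemma Vq_bounds Q L l1 l2 x y z : QB Q l1 l2 -> l1 * pc L x y z <= Vq Q L x y z /\ Vq Q L x y z <= l2 * pc L x y z.
Proof. intros HQ. unfold Vq, pc. apply HQ. Qed.

Theorem stable_assembly (P : Params) (Se Ime Ise : R) (g0 g1 g2 : R -> R -> R -> R) rb Lg Mg Q L l1 l2 c m kap :
  0 < rb -> 0 <= Lg -> 0 <= Mg -> 0 < l1 -> 0 < l2 -> 0 < c -> 0 < m -> 0 < kap -> QB Q l1 l2 ->
  (forall x y z, x ^ 2 + y ^ 2 + z ^ 2 <= kap * pc L x y z /\ pc L x y z <= kap * (x ^ 2 + y ^ 2 + z ^ 2)) ->
  (forall x y z, pc L x y z < m -> Rabs x <= rb /\ Rabs y <= rb /\ Rabs z <= rb) ->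
  (forall x y z, pc L x y z < m ->
     Vd Q L x y z (g0 (Se + x) (Ime + y) (Ise + z)) (g1 (Se + x) (Ime + y) (Ise + z)) (g2 (Se + x) (Ime + y) (Ise + z))
     <= - c * pc L x y z) ->
  (forall S Im Is, boxp Se Ime Ise rb S Im Is ->
     fS P S Im Is = g0 S Im Is /\ fIm P S Im Is = g1 S Im Is /\ fIs P S Im Is = g2 S Im Is) ->
  gLip g0 Se Ime Ise rb Lg Mg -> gLip g1 Se Ime Ise rb Lg Mg -> gLip g2 Se Ime Ise rb Lg Mg ->
  lyap_stable P (Se, Ime, Ise) /\ attractive P (Se, Ime, Ise).
Proof.
  intros Hrb HLg HMg Hl1 Hl2 Hc Hm Hk HQ HL Hbox Hdec Hag G0 G1 G2.
  assert (Hpb : forall S Im Is, pc L (S - Se) (Im - Ime) (Is - Ise) < m -> boxp Se Ime Ise rb S Im Is).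
  { intros S Im Is Hp. apply Hbox in Hp. unfold boxp. tauto. }
  assert (Key : forall (S Im Is dS dIm dIs : R -> R),
    (forall t, 0 <= t -> is_derive S t (dS t) /\ is_derive Im t (dIm t) /\ is_derive Is t (dIs t)) ->
    (forall t, 0 <= t -> pc L (S t - Se) (Im t - Ime) (Is t - Ise) < m ->
       dS t = g0 (S t) (Im t) (Is t) /\ dIm t = g1 (S t) (Im t) (Is t) /\ dIs t = g2 (S t) (Im t) (Is t)) ->
    Vq Q L (S 0 - Se) (Im 0 - Ime) (Is 0 - Ise) < l1 * m ->
    (forall t, 0 <= t -> pc L (S t - Se) (Im t - Ime) (Is t - Ise) < m /\
        d2 (S t) (Im t) (Is t) Se Ime Ise <= kap * Vq Q L (S 0 - Se) (Im 0 - Ime) (Is 0 - Ise) / l1) /\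
    (forall eta, 0 < eta -> exists T, forall t, T <= t -> d2 (S t) (Im t) (Is t) Se Ime Ise < eta)).
  { intros S Im Is dS dIm dIs Hd Hf HV0.
    destruct (curve_lemma g0 g1 g2 Se Ime Ise Q L l1 l2 c m S Im Is dS dIm dIs Hl1 Hl2 Hc Hm HQ Hdec Hd Hf HV0) as [Hb Hev].
    split.
    - intros t Ht. specialize (Hb t Ht).
      destruct (Vq_bounds Q L l1 l2 (S t - Se) (Im t - Ime) (Is t - Ise) HQ) as [Hlo _].
      destruct (HL (S t - Se) (Im t - Ime) (Is t - Ise)) as [Hd2 _].
      split.
      + apply Rmult_lt_reg_l with l1; auto. lra.
      + unfold d2. apply Rmult_le_reg_l with l1; auto.
        replace (l1 * (kap * Vq Q L (S 0 - Se) (Im 0 - Ime) (Is 0 - Ise) / l1)) with (kap * Vq Q L (S 0 - Se) (Im 0 - Ime) (Is 0 - Ise)) by (field; lra).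
        assert (l1 * pc L (S t - Se) (Im t - Ime) (Is t - Ise) <= Vq Q L (S 0 - Se) (Im 0 - Ime) (Is 0 - Ise)) by lra.
        nra.
    - intros eta Heta. destruct (Hev (l1 * eta / kap)) as [T HT].
      { apply Rdiv_lt_0_compat; nra. }
      exists (Rmax T 0). intros t Ht. assert (Ht0 : 0 <= t) by (pose proof (Rmax_r T 0); lra).
      assert (HTt : T <= t) by (pose proof (Rmax_l T 0); lra).
      specialize (HT t HTt).
      destruct (Vq_bounds Q L l1 l2 (S t - Se) (Im t - Ime) (Is t - Ise) HQ) as [Hlo _].
      destruct (HL (S t - Se) (Im t - Ime) (Is t - Ise)) as [Hd2 _].
      assert (pc L (S t - Se) (Im t - Ime) (Is t - Ise) < eta / kap).
      { apply Rmult_lt_reg_l with l1; auto. unfold Rdiv in *. lra. }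
      unfold d2. apply Rmult_lt_reg_l with (/ kap). apply Rinv_0_lt_compat; lra.
      assert (/ kap * (kap * pc L (S t - Se) (Im t - Ime) (Is t - Ise)) = pc L (S t - Se) (Im t - Ime) (Is t - Ise)) by (field; lra).
      assert (0 < / kap) by (apply Rinv_0_lt_compat; lra).
      unfold Rdiv in *. nra. }
  assert (HV0 : forall S0 Im0 Is0, Vq Q L (S0 - Se) (Im0 - Ime) (Is0 - Ise) <= l2 * kap * d2 S0 Im0 Is0 Se Ime Ise).
  { intros. destruct (Vq_bounds Q L l1 l2 (S0 - Se) (Im0 - Ime) (Is0 - Ise) HQ) as [_ Hhi].
    destruct (HL (S0 - Se) (Im0 - Ime) (Is0 - Ise)) as [_ Hp]. unfold d2. nra. }
  assert (HVnn : forall x y z, 0 <= Vq Q L x y z).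
  { intros. destruct (Vq_bounds Q L l1 l2 x y z HQ) as [Hlo _]. pose proof (pc_nonneg L x y z). nra. }
  assert (Orig : forall S Im Is, is_solution P S Im Is ->
     (forall t, 0 <= t -> is_derive S t (fS P (S t) (Im t) (Is t)) /\ is_derive Im t (fIm P (S t) (Im t) (Is t)) /\
                          is_derive Is t (fIs P (S t) (Im t) (Is t))) /\
     (forall t, 0 <= t -> pc L (S t - Se) (Im t - Ime) (Is t - Ise) < m ->
       fS P (S t) (Im t) (Is t) = g0 (S t) (Im t) (Is t) /\ fIm P (S t) (Im t) (Is t) = g1 (S t) (Im t) (Is t) /\
       fIs P (S t) (Im t) (Is t) = g2 (S t) (Im t) (Is t))).
  { intros S Im Is Hs. split. intros t Ht; apply Hs; auto. intros t Ht Hp. apply Hag. apply Hpb; auto. }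
  split.
  - unfold lyap_stable. intros eps Heps.
    assert (He2 : 0 < l1 * eps ^ 2 / kap) by (apply Rdiv_lt_0_compat; [apply Rmult_lt_0_compat; [lra| apply pow_lt; lra]| lra]).
    set (B := Rmin (l1 * m) (l1 * eps ^ 2 / kap) / 2).
    assert (HB : 0 < B).
    { unfold B. assert (0 < l1 * m) by nra. apply Rmin_case; lra. }
    assert (HB1 : B < l1 * m) by (assert (0 < l1 * m) by nra; unfold B; pose proof (Rmin_l (l1 * m) (l1 * eps ^ 2 / kap)); lra).
    assert (HB2 : B < l1 * eps ^ 2 / kap).
    { unfold B; pose proof (Rmin_r (l1 * m) (l1 * eps ^ 2 / kap)). lra. }
    exists (sqrt (B / (l2 * kap))). split.
    { apply sqrt_lt_R0. apply Rdiv_lt_0_compat; nra. }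
    intros S0 Im0 Is0 Hd.
    apply dist3_sq in Hd; [|apply sqrt_lt_R0; apply Rdiv_lt_0_compat; nra].
    rewrite pow2_sqrt in Hd by (left; apply Rdiv_lt_0_compat; nra). fold (d2 S0 Im0 Is0 Se Ime Ise) in Hd.
    assert (HV : Vq Q L (S0 - Se) (Im0 - Ime) (Is0 - Ise) < B).
    { eapply Rle_lt_trans. apply HV0. apply Rmult_lt_reg_l with (/ (l2 * kap)). apply Rinv_0_lt_compat; nra.
      replace (/ (l2 * kap) * (l2 * kap * d2 S0 Im0 Is0 Se Ime Ise)) with (d2 S0 Im0 Is0 Se Ime Ise) by (field; lra).
      unfold Rdiv in Hd. lra. }
    assert (Hfin : forall (S Im Is dS dIm dIs : R -> R),
      (forall t, 0 <= t -> is_derive S t (dS t) /\ is_derive Im t (dIm t) /\ is_derive Is t (dIs t)) ->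
      (forall t, 0 <= t -> pc L (S t - Se) (Im t - Ime) (Is t - Ise) < m ->
         dS t = g0 (S t) (Im t) (Is t) /\ dIm t = g1 (S t) (Im t) (Is t) /\ dIs t = g2 (S t) (Im t) (Is t)) ->
      S 0 = S0 -> Im 0 = Im0 -> Is 0 = Is0 ->
      forall t, 0 <= t -> pc L (S t - Se) (Im t - Ime) (Is t - Ise) < m /\ dist3 (S t) (Im t) (Is t) Se Ime Ise < eps).
    { intros S Im Is dS dIm dIs Hd1 Hf E1 E2 E3 t Ht.
      rewrite <- E1, <- E2, <- E3 in HV.
      destruct (Key S Im Is dS dIm dIs Hd1 Hf ltac:(lra)) as [K1 _].
      destruct (K1 t Ht) as [Kp Kd]. split; auto.
      apply sq_dist3; auto. eapply Rle_lt_trans. apply Kd.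
      apply Rmult_lt_reg_l with (l1 / kap). apply Rdiv_lt_0_compat; lra.
      replace (l1 / kap * (kap * Vq Q L (S 0 - Se) (Im 0 - Ime) (Is 0 - Ise) / l1)) with (Vq Q L (S 0 - Se) (Im 0 - Ime) (Is 0 - Ise)) by (field; lra).
      replace (l1 / kap * eps ^ 2) with (l1 * eps ^ 2 / kap) by (field; lra). lra. }
    split.
    + destruct (existence g0 g1 g2 Se Ime Ise rb Lg Mg ltac:(lra) HLg HMg G0 G1 G2 S0 Im0 Is0) as [S [Im [Is [E1 [E2 [E3 Hd1]]]]]].
      exists S, Im, Is. split; [|auto].
      assert (Hcl : forall t, 0 <= t -> pc L (S t - Se) (Im t - Ime) (Is t - Ise) < m ->
         gc g0 Se Ime Ise rb (S t) (Im t) (Is t) = g0 (S t) (Im t) (Is t) /\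
         gc g1 Se Ime Ise rb (S t) (Im t) (Is t) = g1 (S t) (Im t) (Is t) /\
         gc g2 Se Ime Ise rb (S t) (Im t) (Is t) = g2 (S t) (Im t) (Is t)).
      { intros t Ht Hp. apply Hpb in Hp. destruct Hp as [B1 [B2 B3]]. unfold gc. rewrite !clamp_id; auto. }
      intros t Ht. destruct (Hfin S Im Is _ _ _ Hd1 Hcl E1 E2 E3 t Ht) as [Hp _].
      destruct (Hcl t Ht Hp) as [C1 [C2 C3]]. destruct (Hag (S t) (Im t) (Is t) (Hpb _ _ _ Hp)) as [A1 [A2 A3]].
      destruct (Hd1 t Ht) as [D1 [D2 D3]]. rewrite C1 in D1. rewrite C2 in D2. rewrite C3 in D3.
      rewrite A1, A2, A3. auto.
    + intros S Im Is Hs E1 E2 E3 t Ht. destruct (Orig S Im Is Hs) as [O1 O2].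
      apply (Hfin S Im Is _ _ _ O1 O2 E1 E2 E3 t Ht).
  - unfold attractive. exists (sqrt (l1 * m / (2 * (l2 * kap)))). split.
    { apply sqrt_lt_R0. apply Rdiv_lt_0_compat; nra. }
    intros S Im Is Hs Hd.
    apply dist3_sq in Hd; [|apply sqrt_lt_R0; apply Rdiv_lt_0_compat; nra].
    rewrite pow2_sqrt in Hd by (left; apply Rdiv_lt_0_compat; nra). fold (d2 (S 0) (Im 0) (Is 0) Se Ime Ise) in Hd.
    assert (HV : Vq Q L (S 0 - Se) (Im 0 - Ime) (Is 0 - Ise) < l1 * m).
    { eapply Rle_lt_trans. apply HV0. apply Rmult_lt_reg_l with (/ (l2 * kap)). apply Rinv_0_lt_compat; nra.
      replace (/ (l2 * kap) * (l2 * kap * d2 (S 0) (Im 0) (Is 0) Se Ime Ise)) with (d2 (S 0) (Im 0) (Is 0) Se Ime Ise) by (field; lra).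
      replace (/ (l2 * kap) * (l1 * m)) with (l1 * m / (l2 * kap)) by (field; lra).
      assert (l1 * m / (2 * (l2 * kap)) < l1 * m / (l2 * kap)).
      { assert (0 < l2 * kap) by nra. unfold Rdiv. apply Rmult_lt_compat_l. nra. apply Rinv_lt_contravar; [apply Rmult_lt_0_compat; lra | lra]. }
      lra. }
    destruct (Orig S Im Is Hs) as [O1 O2].
    destruct (Key S Im Is _ _ _ O1 O2 HV) as [_ Hev].
    apply is_lim_spec. intros eps. simpl.
    destruct (Hev (eps ^ 2)) as [T HT]. { pose proof (cond_pos eps). nra. }
    exists T. intros t Ht. rewrite Rminus_0_r. rewrite Rabs_right by (unfold dist3; apply Rle_ge, sqrt_pos).
    apply sq_dist3. apply cond_pos. apply HT; lra.
Qed.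

Lemma Vq_hom Q L k x y z : Vq Q L (k * x) (k * y) (k * z) = k ^ 2 * Vq Q L x y z.
Proof. unfold Vq, qv, cc1, cc2, cc3. ring. Qed.

Theorem unstable_assembly (P : Params) (Se Ime Ise : R) (g0 g1 g2 : R -> R -> R -> R) rb Q L l2 c m kap x1 y1 z1 :
  0 < l2 -> 0 < c -> 0 < m -> 0 < kap ->
  (forall a b c, qv Q a b c <= l2 * (a ^ 2 + b ^ 2 + c ^ 2)) ->
  (forall x y z, pc L x y z <= kap * (x ^ 2 + y ^ 2 + z ^ 2)) ->
  (forall x y z, pc L x y z < m -> Rabs x <= rb /\ Rabs y <= rb /\ Rabs z <= rb) ->
  (forall x y z, pc L x y z < m ->
     c * pc L x y z <= Vd Q L x y z (g0 (Se + x) (Ime + y) (Ise + z)) (g1 (Se + x) (Ime + y) (Ise + z)) (g2 (Se + x) (Ime + y) (Ise + z))) ->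
  (forall S Im Is, boxp Se Ime Ise rb S Im Is ->
     fS P S Im Is = g0 S Im Is /\ fIm P S Im Is = g1 S Im Is /\ fIs P S Im Is = g2 S Im Is) ->
  0 < Vq Q L x1 y1 z1 ->
  unstable P (Se, Ime, Ise).
Proof.
  intros Hl2 Hc Hm Hk HQ HL Hbox Hinc Hag Hdir Hst.
  unfold lyap_stable in Hst.
  assert (He : 0 < sqrt (m / (2 * kap))) by (apply sqrt_lt_R0; apply Rdiv_lt_0_compat; lra).
  destruct (Hst _ He) as [d [Hd Hsol]].
  set (n1 := Rabs x1 + Rabs y1 + Rabs z1 + 1).
  assert (Hn1 : 1 <= n1) by (unfold n1; pose proof (Rabs_pos x1); pose proof (Rabs_pos y1); pose proof (Rabs_pos z1); lra).
  set (tau := d / (2 * n1)).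
  assert (Htau : 0 < tau) by (unfold tau; apply Rdiv_lt_0_compat; lra).
  assert (Hd0 : dist3 (Se + tau * x1) (Ime + tau * y1) (Ise + tau * z1) Se Ime Ise < d).
  { apply sq_dist3; auto. unfold d2.
    replace (Se + tau * x1 - Se) with (tau * x1) by ring. replace (Ime + tau * y1 - Ime) with (tau * y1) by ring.
    replace (Ise + tau * z1 - Ise) with (tau * z1) by ring.
    assert (x1 ^ 2 + y1 ^ 2 + z1 ^ 2 <= n1 ^ 2).
    { unfold n1. rewrite <- (pow2_abs x1), <- (pow2_abs y1), <- (pow2_abs z1).
      pose proof (Rabs_pos x1); pose proof (Rabs_pos y1); pose proof (Rabs_pos z1). nra. }
    assert (tau * n1 = d / 2) by (unfold tau; field; lra).
    assert (0 <= tau ^ 2) by apply pow2_ge_0.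
    replace ((tau * x1) ^ 2 + (tau * y1) ^ 2 + (tau * z1) ^ 2) with (tau ^ 2 * (x1 ^ 2 + y1 ^ 2 + z1 ^ 2)) by ring.
    assert (tau ^ 2 * (x1 ^ 2 + y1 ^ 2 + z1 ^ 2) <= tau ^ 2 * n1 ^ 2) by (apply Rmult_le_compat_l; auto).
    replace (tau ^ 2 * n1 ^ 2) with ((tau * n1) ^ 2) in H2 by ring. rewrite H0 in H2. nra. }
  destruct (Hsol _ _ _ Hd0) as [[S [Im [Is [Hs [E1 [E2 E3]]]]]] Hall].
  specialize (Hall S Im Is Hs E1 E2 E3).
  assert (Hp : forall t, 0 <= t -> pc L (S t - Se) (Im t - Ime) (Is t - Ise) < m / 2).
  { intros t Ht. specialize (Hall t Ht). apply dist3_sq in Hall; auto.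
    rewrite pow2_sqrt in Hall by (left; apply Rdiv_lt_0_compat; lra).
    pose proof (HL (S t - Se) (Im t - Ime) (Is t - Ise)). unfold d2 in Hall.
    apply Rmult_lt_compat_l with (r := kap) in Hall; auto.
    replace (kap * (m / (2 * kap))) with (m / 2) in Hall by (field; lra). lra. }
  apply (chetaev (fun t => Vq Q L (S t - Se) (Im t - Ime) (Is t - Ise))
            (fun t => Vd Q L (S t - Se) (Im t - Ime) (Is t - Ise) (fS P (S t) (Im t) (Is t)) (fIm P (S t) (Im t) (Is t)) (fIs P (S t) (Im t) (Is t)))
            (fun t => pc L (S t - Se) (Im t - Ime) (Is t - Ise)) l2 c m); auto.
  - intros t Ht. destruct (Hs t Ht) as [D1 [D2 D3]]. apply D_Vq; auto.
  - intros t Ht. unfold Vq, pc. apply HQ.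
  - intros t Ht. apply pc_nonneg.
  - intros t Ht. specialize (Hp t Ht). assert (Hp' : pc L (S t - Se) (Im t - Ime) (Is t - Ise) < m) by lra.
    destruct (Hbox _ _ _ Hp') as [B1 [B2 B3]].
    destruct (Hag (S t) (Im t) (Is t) ltac:(unfold boxp; auto)) as [A1 [A2 A3]].
    rewrite A1, A2, A3. specialize (Hinc _ _ _ Hp').
    replace (Se + (S t - Se)) with (S t) in Hinc by ring.
    replace (Ime + (Im t - Ime)) with (Im t) in Hinc by ring.
    replace (Ise + (Is t - Ise)) with (Is t) in Hinc by ring. exact Hinc.
  - intros t Ht. specialize (Hp t Ht). lra.
  - rewrite E1, E2, E3.
    replace (Se + tau * x1 - Se) with (tau * x1) by ring. replace (Ime + tau * y1 - Ime) with (tau * y1) by ring.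
    replace (Ise + tau * z1 - Ise) with (tau * z1) by ring.
    rewrite Vq_hom. apply Rmult_lt_0_compat; auto. apply pow_lt; auto.
Qed.

Lemma gLip_ext (g h : R -> R -> R -> R) Se Ime Ise rb Lg Mg :
  (forall S Im Is, g S Im Is = h S Im Is) -> gLip h Se Ime Ise rb Lg Mg -> gLip g Se Ime Ise rb Lg Mg.
Proof. intros E [H1 H2]. split; intros; rewrite ?E; auto. Qed.

Definition poly6 a0 a1 a2 a3 a4 a5 (S Im Is : R) := a0 + a1 * S + a2 * Im + a3 * Is + a4 * (S * Im) + a5 * (S * Is).

Lemma prod_lip S Im S' Im' Bx : Rabs S <= Bx -> Rabs Im' <= Bx ->
  Rabs (S * Im - S' * Im') <= Bx * (Rabs (S - S') + Rabs (Im - Im')).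
Proof.
  intros H1 H2. replace (S * Im - S' * Im') with (S * (Im - Im') + Im' * (S - S')) by ring.
  eapply Rle_trans. apply Rabs_triang. rewrite !Rabs_mult.
  pose proof (Rabs_pos (Im - Im')). pose proof (Rabs_pos (S - S')). pose proof (Rabs_pos S). pose proof (Rabs_pos Im'). nra.
Qed.

Lemma poly6_gLip a0 a1 a2 a3 a4 a5 Se Ime Ise rb : 0 <= rb ->
  let Bx := Rabs Se + Rabs Ime + Rabs Ise + rb in
  gLip (poly6 a0 a1 a2 a3 a4 a5) Se Ime Ise rb
    (Rabs a1 + Rabs a2 + Rabs a3 + (Rabs a4 + Rabs a5) * Bx)
    (Rabs a0 + (Rabs a1 + Rabs a2 + Rabs a3) * Bx + (Rabs a4 + Rabs a5) * (Bx * Bx)).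
Proof.
  intros Hrb Bx.
  assert (Hb : forall S Im Is, boxp Se Ime Ise rb S Im Is -> Rabs S <= Bx /\ Rabs Im <= Bx /\ Rabs Is <= Bx).
  { intros S Im Is [B1 [B2 B3]]. unfold Bx.
    pose proof (Rabs_pos Se); pose proof (Rabs_pos Ime); pose proof (Rabs_pos Ise).
    revert B1 B2 B3. unfold Rabs. repeat destruct Rcase_abs; lra. }
  pose proof (Rabs_pos a0). pose proof (Rabs_pos a1). pose proof (Rabs_pos a2). pose proof (Rabs_pos a3).
  pose proof (Rabs_pos a4). pose proof (Rabs_pos a5).
  assert (HBx : 0 <= Bx) by (unfold Bx; pose proof (Rabs_pos Se); pose proof (Rabs_pos Ime); pose proof (Rabs_pos Ise); lra).
  split.
  - intros S Im Is S' Im' Is' HB HB'. destruct (Hb _ _ _ HB) as [b1 [b2 b3]]. destruct (Hb _ _ _ HB') as [b1' [b2' b3']].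
    unfold poly6.
    replace (a0 + a1 * S + a2 * Im + a3 * Is + a4 * (S * Im) + a5 * (S * Is) -
      (a0 + a1 * S' + a2 * Im' + a3 * Is' + a4 * (S' * Im') + a5 * (S' * Is')))
      with (a1 * (S - S') + a2 * (Im - Im') + a3 * (Is - Is') + a4 * (S * Im - S' * Im') + a5 * (S * Is - S' * Is')) by ring.
    pose proof (prod_lip S Im S' Im' Bx b1 b2'). pose proof (prod_lip S Is S' Is' Bx b1 b3').
    set (dS := Rabs (S - S')) in *. set (dI := Rabs (Im - Im')) in *. set (dJ := Rabs (Is - Is')) in *.
    assert (0 <= dS) by apply Rabs_pos. assert (0 <= dI) by apply Rabs_pos. assert (0 <= dJ) by apply Rabs_pos.
    assert (T1 : Rabs (a1 * (S - S')) <= Rabs a1 * (dS + dI + dJ)) by (rewrite Rabs_mult; apply Rmult_le_compat_l; unfold dS; lra).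
    assert (T2 : Rabs (a2 * (Im - Im')) <= Rabs a2 * (dS + dI + dJ)) by (rewrite Rabs_mult; apply Rmult_le_compat_l; unfold dI; lra).
    assert (T3 : Rabs (a3 * (Is - Is')) <= Rabs a3 * (dS + dI + dJ)) by (rewrite Rabs_mult; apply Rmult_le_compat_l; unfold dJ; lra).
    assert (T4 : Rabs (a4 * (S * Im - S' * Im')) <= Rabs a4 * Bx * (dS + dI + dJ)).
    { rewrite Rabs_mult, Rmult_assoc. apply Rmult_le_compat_l; auto. eapply Rle_trans; eauto. apply Rmult_le_compat_l; lra. }
    assert (T5 : Rabs (a5 * (S * Is - S' * Is')) <= Rabs a5 * Bx * (dS + dI + dJ)).
    { rewrite Rabs_mult, Rmult_assoc. apply Rmult_le_compat_l; auto. eapply Rle_trans; eauto. apply Rmult_le_compat_l; lra. }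
    assert (Rabs (a1 * (S - S') + a2 * (Im - Im') + a3 * (Is - Is') + a4 * (S * Im - S' * Im') + a5 * (S * Is - S' * Is'))
      <= Rabs (a1 * (S - S')) + Rabs (a2 * (Im - Im')) + Rabs (a3 * (Is - Is')) + Rabs (a4 * (S * Im - S' * Im')) + Rabs (a5 * (S * Is - S' * Is'))).
    { repeat (eapply Rle_trans; [apply Rabs_triang| apply Rplus_le_compat_r]). lra. }
    nra.
  - intros S Im Is HB. destruct (Hb _ _ _ HB) as [b1 [b2 b3]]. unfold poly6.
    assert (Rabs (a0 + a1 * S + a2 * Im + a3 * Is + a4 * (S * Im) + a5 * (S * Is))
      <= Rabs a0 + Rabs (a1 * S) + Rabs (a2 * Im) + Rabs (a3 * Is) + Rabs (a4 * (S * Im)) + Rabs (a5 * (S * Is))).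
    { repeat (eapply Rle_trans; [apply Rabs_triang| apply Rplus_le_compat_r]). lra. }
    rewrite !Rabs_mult in H5.
    pose proof (Rabs_pos S); pose proof (Rabs_pos Im); pose proof (Rabs_pos Is).
    assert (Rabs S * Rabs Im <= Bx * Bx) by (apply Rmult_le_compat; auto).
    assert (Rabs S * Rabs Is <= Bx * Bx) by (apply Rmult_le_compat; auto).
    nra.
Qed.

Lemma gLip_mono g Se Ime Ise rb Lg Mg Lg' Mg' : Lg <= Lg' -> Mg <= Mg' ->
  gLip g Se Ime Ise rb Lg Mg -> gLip g Se Ime Ise rb Lg' Mg'.
Proof.
  intros HL HM [H1 H2]. split.
  - intros. eapply Rle_trans. apply H1; auto.
    apply Rmult_le_compat_r; auto. pose proof (Rabs_pos (S - S')); pose proof (Rabs_pos (Im - Im')); pose proof (Rabs_pos (Is - Is')); lra.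
  - intros. eapply Rle_trans. apply H2; auto. auto.
Qed.

Lemma gLip_nonneg g Se Ime Ise rb Lg Mg : 0 <= rb -> gLip g Se Ime Ise rb Lg Mg -> 0 <= Mg.
Proof.
  intros Hrb [_ H]. specialize (H Se Ime Ise). eapply Rle_trans; [apply Rabs_pos| apply H].
  unfold boxp. rewrite !Rminus_diag, Rabs_R0. lra.
Qed.

Lemma poly6_gLip' a0 a1 a2 a3 a4 a5 Se Ime Ise rb : 0 <= rb ->
  exists Lg Mg, 0 <= Lg /\ 0 <= Mg /\ gLip (poly6 a0 a1 a2 a3 a4 a5) Se Ime Ise rb Lg Mg.
Proof.
  intros Hrb. pose proof (poly6_gLip a0 a1 a2 a3 a4 a5 Se Ime Ise rb Hrb) as H. simpl in H.
  eexists; eexists; split; [|split]; [| |exact H].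
  - pose proof (Rabs_pos a1); pose proof (Rabs_pos a2); pose proof (Rabs_pos a3); pose proof (Rabs_pos a4); pose proof (Rabs_pos a5).
    pose proof (Rabs_pos Se); pose proof (Rabs_pos Ime); pose proof (Rabs_pos Ise). nra.
  - eapply gLip_nonneg; eauto.
Qed.

Lemma three_gLip g0 g1 g2 Se Ime Ise rb : 0 <= rb ->
  (exists Lg Mg, 0 <= Lg /\ 0 <= Mg /\ gLip g0 Se Ime Ise rb Lg Mg) ->
  (exists Lg Mg, 0 <= Lg /\ 0 <= Mg /\ gLip g1 Se Ime Ise rb Lg Mg) ->
  (exists Lg Mg, 0 <= Lg /\ 0 <= Mg /\ gLip g2 Se Ime Ise rb Lg Mg) ->
  exists Lg Mg, 0 <= Lg /\ 0 <= Mg /\ gLip g0 Se Ime Ise rb Lg Mg /\ gLip g1 Se Ime Ise rb Lg Mg /\ gLip g2 Se Ime Ise rb Lg Mg.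
Proof.
  intros Hrb [L0 [M0 [? [? G0]]]] [L1 [M1 [? [? G1]]]] [L2 [M2 [? [? G2]]]].
  exists (L0 + L1 + L2), (M0 + M1 + M2). split; [lra|split; [lra|split; [|split]]];
  eapply gLip_mono; eauto; lra.
Qed.

Lemma sq_abs_lt c r : 0 < r -> c ^ 2 < r ^ 2 -> Rabs c < r.
Proof. intros Hr H. rewrite <- pow2_abs in H. pose proof (Rabs_pos c). nra. Qed.

Lemma rho_choice q Kx : 0 < q -> 0 <= Kx -> 12 * Kx * (q / (12 * Kx + 1)) <= q /\ 0 < q / (12 * Kx + 1).
Proof.
  intros Hq HK. split.
  - apply Rmult_le_reg_r with (12 * Kx + 1). lra.
    replace (12 * Kx * (q / (12 * Kx + 1)) * (12 * Kx + 1)) with (12 * Kx * q) by (field; lra). nra.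
  - apply Rdiv_lt_0_compat; lra.
Qed.

Definition sR0 A sm mu rho be := A * sm / (mu * (mu + be + rho)).
Definition sSe sm mu rho be := (mu + be + rho) / sm.
Definition sIme A sm mu rho be := mu * (sR0 A sm mu rho be - 1) / sm.
Definition sIse A sm mu rho be r := mu * be * (sR0 A sm mu rho be - 1) / (sm * (mu + r)).
Definition sgam A sm mu rho be := sm * sIme A sm mu rho be.
Definition sQ K b11 b12 b21 b22 q3 := mkQ6 (K * (Dt b11 b12 b21 b22 + b22 ^ 2 + b21 ^ 2)) (K * (Dt b11 b12 b21 b22 + b12 ^ 2 + b11 ^ 2)) q3
                (K * (- b22 * b12 - b11 * b21)) 0 0.
Definition LNy := mkL9 1 1 0 0 1 0 0 0 1.
Definition g0s A sm mu (S Im Is : R) := A - sm * S * Im - mu * S.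
Definition g1s sm mu rho be (S Im Is : R) := sm * S * Im - (mu + rho + be) * Im.
Definition g2s mu be r (S Im Is : R) := be * Im - r * Is - mu * Is.

Lemma estar_ident (A sm mu rho be r K x y z : R) :
  sm <> 0 -> mu <> 0 -> mu + be + rho <> 0 -> mu + r <> 0 ->
  Vd (sQ K (- mu) (- (be + rho)) (sgam A sm mu rho be) (- sgam A sm mu rho be) 1) LNy x y z
     (g0s A sm mu (sSe sm mu rho be + x) (sIme A sm mu rho be + y) (sIse A sm mu rho be r + z))
     (g1s sm mu rho be (sSe sm mu rho be + x) (sIme A sm mu rho be + y) (sIse A sm mu rho be r + z))
     (g2s mu be r (sSe sm mu rho be + x) (sIme A sm mu rho be + y) (sIse A sm mu rho be r + z))
  = K * (2 * (X1 (- mu) (- (be + rho)) (sgam A sm mu rho be) (- sgam A sm mu rho be) (x + y) y *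
                 ((- mu) * (x + y) + (- (be + rho)) * y) +
              X2 (- mu) (- (be + rho)) (sgam A sm mu rho be) (- sgam A sm mu rho be) (x + y) y *
                 (sgam A sm mu rho be * (x + y) + (- sgam A sm mu rho be) * y + sm * x * y)))
    + 2 * z * (be * y - (r + mu) * z).
Proof.
  intros Hsm Hmu Hk Hr.
  unfold Vd, qd, cc1, cc2, cc3, X1, X2, sQ, LNy, g0s, g1s, g2s, sgam, sIse, sIme, sSe, sR0; simpl; unfold Dt. field. auto.
Qed.

Lemma pc_LNy x y z : pc LNy x y z = (x + y) ^ 2 + y ^ 2 + z ^ 2.
Proof. unfold pc, cc1, cc2, cc3, LNy; simpl. ring. Qed.

Lemma qv_sQ K b11 b12 b21 b22 q3 a b c : qv (sQ K b11 b12 b21 b22 q3) a b c = K * Xf b11 b12 b21 b22 a b + q3 * c ^ 2.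
Proof. unfold qv, sQ, Xf, Dt; simpl. ring. Qed.

Theorem estar_las (P : Params) : params_pos P ->
  1 < Rnum P < 1 + psm P * (pmu P + pr P) / (pmu P * pbeta P) * pCI P ->
  loc_asym_stable P (Estar P).
Proof.
  intros [HA [Hsm [Hss [Hmu [Hrho [Hbe [Hr HCI]]]]]]] [HR1 HR2].
  set (A := pA P) in *. set (sm := psm P) in *. set (ss := pss P) in *. set (mu := pmu P) in *.
  set (rho := prho P) in *. set (be := pbeta P) in *. set (r := pr P) in *. set (CI := pCI P) in *.
  assert (HRn : Rnum P = sR0 A sm mu rho be) by reflexivity.
  unfold loc_asym_stable.
  change (Estar P) with (sSe sm mu rho be, sIme A sm mu rho be, sIse A sm mu rho be r).
  set (Se := sSe sm mu rho be). set (Ime := sIme A sm mu rho be). set (Ise := sIse A sm mu rho be r).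
  assert (HIme : 0 < Ime).
  { unfold Ime, sIme. rewrite <- HRn. apply Rdiv_lt_0_compat; [apply Rmult_lt_0_compat|]; lra. }
  assert (HIse : Ise < CI).
  { unfold Ise, sIse. rewrite <- HRn. apply Rmult_lt_reg_r with (sm * (mu + r)). apply Rmult_lt_0_compat; lra.
    replace (mu * be * (Rnum P - 1) / (sm * (mu + r)) * (sm * (mu + r))) with (mu * be * (Rnum P - 1)) by (field; lra).
    assert (Rnum P - 1 < sm * (mu + r) / (mu * be) * CI) by lra.
    apply Rmult_lt_compat_l with (r := mu * be) in H; [|nra].
    replace (mu * be * (sm * (mu + r) / (mu * be) * CI)) with (CI * (sm * (mu + r))) in H by (field; lra). lra. }
  set (gam := sgam A sm mu rho be).
  assert (Hgam : 0 < gam) by (unfold gam, sgam; fold Ime; nra).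
  set (b11 := - mu). set (b12 := - (be + rho)). set (b21 := gam). set (b22 := - gam).
  assert (HD : 0 < Dt b11 b12 b21 b22) by (unfold Dt, b11, b12, b21, b22; nra).
  assert (HT : 0 < - (b11 + b22)) by (unfold b11, b22; lra).
  set (K := KA b11 b12 b21 b22 (r + mu) be).
  assert (HK : 0 < K).
  { unfold K, KA. assert (0 <= be ^ 2 / ((r + mu) * Dt b11 b12 b21 b22 * - (b11 + b22))).
    apply Rmult_le_pos. apply pow2_ge_0. left; apply Rinv_0_lt_compat. apply Rmult_lt_0_compat; [apply Rmult_lt_0_compat|]; lra. lra. }
  set (cm := Rmin (K * Dt b11 b12 b21 b22 * (- (b11 + b22))) (r + mu)).
  assert (Hcm : 0 < cm).
  { unfold cm. apply Rmin_case; [|lra]. apply Rmult_lt_0_compat; [apply Rmult_lt_0_compat|]; lra. }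
  set (Kx := K * Xm b11 b12 b21 b22 * sm).
  assert (HKx : 0 <= Kx) by (unfold Kx; pose proof (Xm_pos b11 b12 b21 b22); apply Rmult_le_pos; [apply Rmult_le_pos|]; lra).
  destruct (rho_choice cm Kx Hcm HKx) as [Hrc Hrho0].
  set (rho0 := cm / (12 * Kx + 1)) in *.
  set (rb := (CI - Ise) / 2).
  assert (Hrb : 0 < rb) by (unfold rb; lra).
  set (rp := Rmin rho0 (rb / 2)).
  assert (Hrp : 0 < rp) by (unfold rp; apply Rmin_case; lra).
  assert (Hrp1 : rp <= rho0) by apply Rmin_l. assert (Hrp2 : rp <= rb / 2) by apply Rmin_r.
  set (Q := sQ K b11 b12 b21 b22 1).
  destruct (three_gLip (g0s A sm mu) (g1s sm mu rho be) (g2s mu be r) Se Ime Ise rb ltac:(lra)) as [Lg [Mg [HLg [HMg [G0 [G1 G2]]]]]].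
  { destruct (poly6_gLip' A (- mu) 0 0 (- sm) 0 Se Ime Ise rb ltac:(lra)) as [L0 [M0 [? [? H0]]]].
    exists L0, M0. split; auto. split; auto. eapply gLip_ext; [|exact H0]. intros. unfold g0s, poly6. ring. }
  { destruct (poly6_gLip' 0 0 (- (mu + rho + be)) 0 sm 0 Se Ime Ise rb ltac:(lra)) as [L0 [M0 [? [? H0]]]].
    exists L0, M0. split; auto. split; auto. eapply gLip_ext; [|exact H0]. intros. unfold g1s, poly6. ring. }
  { destruct (poly6_gLip' 0 0 be (- (r + mu)) 0 0 Se Ime Ise rb ltac:(lra)) as [L0 [M0 [? [? H0]]]].
    exists L0, M0. split; auto. split; auto. eapply gLip_ext; [|exact H0]. intros. unfold g2s, poly6. ring. }
  apply (stable_assembly P Se Ime Ise (g0s A sm mu) (g1s sm mu rho be) (g2s mu be r) rb Lg Mg Q LNy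
           (Rmin (K * Dt b11 b12 b21 b22) 1) (K * Bs b11 b12 b21 b22 + 1) (cm / 2) (rp ^ 2) 3); auto; try lra.
  - apply Rmin_case; [apply Rmult_lt_0_compat|]; lra.
  - pose proof (Rabs_pos (Dt b11 b12 b21 b22)). unfold Bs.
    assert (0 <= b11 ^ 2 + b12 ^ 2 + b21 ^ 2 + b22 ^ 2) by (pose proof (pow2_ge_0 b11); pose proof (pow2_ge_0 b12); pose proof (pow2_ge_0 b21); pose proof (pow2_ge_0 b22); lra).
    nra.
  - apply pow_lt; lra.
  - intros a b c. unfold Q. rewrite qv_sQ. pose proof (Xf_lower b11 b12 b21 b22 a b). pose proof (Xf_upper b11 b12 b21 b22 a b).
    assert (0 <= a ^ 2 + b ^ 2) by (pose proof (pow2_ge_0 a); pose proof (pow2_ge_0 b); lra).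
    pose proof (pow2_ge_0 c).
    set (mn := Rmin (K * Dt b11 b12 b21 b22) 1).
    assert (mn <= K * Dt b11 b12 b21 b22) by apply Rmin_l. assert (mn <= 1) by apply Rmin_r.
    assert (0 < mn) by (unfold mn; apply Rmin_case; [apply Rmult_lt_0_compat|]; lra).
    split.
    + assert (mn * (a ^ 2 + b ^ 2) <= K * (Dt b11 b12 b21 b22 * (a ^ 2 + b ^ 2))) by (rewrite <- Rmult_assoc; apply Rmult_le_compat_r; auto).
      assert (K * (Dt b11 b12 b21 b22 * (a ^ 2 + b ^ 2)) <= K * Xf b11 b12 b21 b22 a b) by (apply Rmult_le_compat_l; lra).
      assert (mn * c ^ 2 <= 1 * c ^ 2) by (apply Rmult_le_compat_r; auto). nra.
    + assert (K * Xf b11 b12 b21 b22 a b <= K * (Bs b11 b12 b21 b22 * (a ^ 2 + b ^ 2))) by (apply Rmult_le_compat_l; lra).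
      assert (0 <= Bs b11 b12 b21 b22) by (unfold Bs; pose proof (Rabs_pos (Dt b11 b12 b21 b22)); pose proof (pow2_ge_0 b11); pose proof (pow2_ge_0 b12); pose proof (pow2_ge_0 b21); pose proof (pow2_ge_0 b22); lra).
      assert (0 <= K * Bs b11 b12 b21 b22 * c ^ 2) by (apply Rmult_le_pos; [apply Rmult_le_pos|]; lra).
      nra.
  - intros x y z. rewrite pc_LNy. split.
    + pose proof (pow2_ge_0 (x + 2 * y)). pose proof (pow2_ge_0 x). pose proof (pow2_ge_0 y). pose proof (pow2_ge_0 z). nra.
    + pose proof (pow2_ge_0 (x - y)). pose proof (pow2_ge_0 z). nra.
  - intros x y z Hp. rewrite pc_LNy in Hp.
    assert (H1 : Rabs (x + y) < rp) by (apply sq_abs_lt; auto; pose proof (pow2_ge_0 y); pose proof (pow2_ge_0 z); lra).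
    assert (H2 : Rabs y < rp) by (apply sq_abs_lt; auto; pose proof (pow2_ge_0 (x + y)); pose proof (pow2_ge_0 z); lra).
    assert (H3 : Rabs z < rp) by (apply sq_abs_lt; auto; pose proof (pow2_ge_0 (x + y)); pose proof (pow2_ge_0 y); lra).
    assert (Rabs x <= Rabs (x + y) + Rabs y) by (replace x with ((x + y) + - y) at 1 by ring; rewrite <- (Rabs_Ropp y); apply Rabs_triang).
    repeat split; lra.
  - intros x y z Hp.
    assert (Hp' := Hp). rewrite pc_LNy in Hp'.
    assert (H1 : Rabs (x + y) < rp) by (apply sq_abs_lt; auto; pose proof (pow2_ge_0 y); pose proof (pow2_ge_0 z); lra).
    assert (H2 : Rabs y < rp) by (apply sq_abs_lt; auto; pose proof (pow2_ge_0 (x + y)); pose proof (pow2_ge_0 z); lra).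
    assert (Hx : Rabs x <= Rabs (x + y) + Rabs y) by (replace x with ((x + y) + - y) at 1 by ring; rewrite <- (Rabs_Ropp y); apply Rabs_triang).
    unfold Q, Se, Ime, Ise, b11, b12, b21, b22, gam. rewrite estar_ident by lra.
    rewrite pc_LNy.
    replace (- (r + mu) * z) with (- ((r + mu) * z)) by ring.
    pose proof (lemmaA (- mu) (- (be + rho)) (sgam A sm mu rho be) (- sgam A sm mu rho be) (r + mu) be sm rho0 (x + y) y z (sm * x * y)) as LA.
    fold b11 b12 gam b21 in LA. fold b22 in LA. fold K in LA. fold cm in LA.
    replace (cm / 2) with (Rmin (K * Dt b11 b12 b21 b22 * - (b11 + b22)) (r + mu) / 2) by reflexivity.
    apply LA; auto; try lra.
    + assert (Hrc' : 12 * K * Xm b11 b12 b21 b22 * sm * rho0 <= cm) by (unfold Kx in Hrc; lra). exact Hrc'.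
    + rewrite Rabs_mult, Rabs_mult, (Rabs_right sm) by lra.
      pose proof (Rabs_pos x). pose proof (Rabs_pos y). pose proof (Rabs_pos z). pose proof (Rabs_pos (x + y)).
      assert (Rabs y <= rho0) by lra.
      assert (Rabs x * Rabs y <= (Rabs (x + y) + Rabs y + Rabs z) * rho0) by (apply Rmult_le_compat; lra).
      nra.
  - intros S Im Is [B1 [B2 B3]].
    assert (HIs : Is < CI) by (revert B3; unfold rb, Rabs; destruct Rcase_abs; lra).
    unfold fS, fIm, fIs, g0s, g1s, g2s, posp, Tr. fold A sm ss mu rho be r CI.
    rewrite Rmax_left by lra. destruct (Rlt_dec Is CI); [|lra]. repeat split; ring.
Qed.

Definition sImo A sm mu rho be S := mu * sR0 A sm mu rho be / sm - mu * S / (mu + be + rho).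
Definition sIso A sm mu rho be r CI S := be * sR0 A sm mu rho be / sm - be * S / (mu + be + rho) - r * CI / mu.
Definition Fres A sm ss mu rho be r CI S :=
  sm * S * sImo A sm mu rho be S + ss * S * (sIso A sm mu rho be r CI S - CI) - (mu + rho + be) * sImo A sm mu rho be S.
Definition Q0 sm ss mu be := mu * sm + be * ss.
Definition ssig A sm ss mu rho be r CI := A / mu - (mu + be + rho) * ss * (r + mu) * CI / (mu * Q0 sm ss mu be) + (mu + be + rho) * mu / Q0 sm ss mu be.
Definition spi A sm ss mu rho be := (mu + be + rho) * A / Q0 sm ss mu be.

Lemma Fres_fact A sm ss mu rho be r CI S : 0 < sm -> 0 < ss -> 0 < mu -> 0 < rho -> 0 < be ->
  Fres A sm ss mu rho be r CI S = - (Q0 sm ss mu be / (mu + be + rho)) * (S ^ 2 - ssig A sm ss mu rho be r CI * S + spi A sm ss mu rho be).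
Proof.
  intros. unfold Fres, sImo, sIso, ssig, spi, Q0, sR0. field. repeat split; nra.
Qed.

Definition Lam A sm ss mu rho be r CI S := sm * sImo A sm mu rho be S + ss * (sIso A sm mu rho be r CI S - CI).
Definition eb21 A sm ss mu rho be r CI S := Lam A sm ss mu rho be r CI S - ss * S * be / (be + rho).
Definition eb22 A sm ss mu rho be r CI S := sm * S - (mu + rho + be) - Lam A sm ss mu rho be r CI S.

Lemma D_ident A sm ss mu rho be r CI S : 0 < sm -> 0 < ss -> 0 < mu -> 0 < rho -> 0 < be ->
  Dt (- mu) (- (be + rho)) (eb21 A sm ss mu rho be r CI S) (eb22 A sm ss mu rho be r CI S) * S =
  (mu + be + rho) * Fres A sm ss mu rho be r CI S + (mu + be + rho) * A - Q0 sm ss mu be * S ^ 2.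
Proof.
  intros. unfold Dt, eb21, eb22, Lam, Fres, sImo, sIso, Q0, sR0. field. repeat split; nra.
Qed.

Definition spp sm ss mu be r CI := (mu + r) * sm * ss * CI / (mu * (mu * sm + be * ss)).
Definition sqq sm ss mu be := mu * sm / (mu * sm + be * ss).
Definition sdisc A sm ss mu rho be r CI := (sR0 A sm mu rho be - spp sm ss mu be r CI - sqq sm ss mu be) ^ 2 - 4 * spp sm ss mu be r CI * sqq sm ss mu be.
Definition sS A sm ss mu rho be r CI s := (mu + be + rho) / (2 * sm) * (sR0 A sm mu rho be - spp sm ss mu be r CI + sqq sm ss mu be + s).

Lemma roots_sum A sm ss mu rho be r CI s : 0 < sm -> 0 < ss -> 0 < mu -> 0 < rho -> 0 < be ->
  sS A sm ss mu rho be r CI (- s) + sS A sm ss mu rho be r CI s = ssig A sm ss mu rho be r CI.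
Proof. intros. unfold sS, ssig, spp, sqq, sR0, Q0. field. repeat split; nra. Qed.

Lemma roots_prod A sm ss mu rho be r CI s : 0 < sm -> 0 < ss -> 0 < mu -> 0 < rho -> 0 < be ->
  s ^ 2 = sdisc A sm ss mu rho be r CI ->
  sS A sm ss mu rho be r CI (- s) * sS A sm ss mu rho be r CI s = spi A sm ss mu rho be.
Proof.
  intros H1 H2 H3 H4 H5 Hs.
  transitivity (((mu + be + rho) / (2 * sm)) ^ 2 * ((sR0 A sm mu rho be - spp sm ss mu be r CI + sqq sm ss mu be) ^ 2 - s ^ 2)).
  { unfold sS. ring. }
  rewrite Hs. unfold sdisc, spi, spp, sqq, sR0, Q0. field. repeat split; nra.
Qed.

Lemma Fres_root A sm ss mu rho be r CI s : 0 < sm -> 0 < ss -> 0 < mu -> 0 < rho -> 0 < be ->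
  s ^ 2 = sdisc A sm ss mu rho be r CI ->
  Fres A sm ss mu rho be r CI (sS A sm ss mu rho be r CI s) = 0 /\
  Fres A sm ss mu rho be r CI (sS A sm ss mu rho be r CI (- s)) = 0.
Proof.
  intros H1 H2 H3 H4 H5 Hs.
  assert (Hs' : (- s) ^ 2 = sdisc A sm ss mu rho be r CI) by (rewrite <- Hs; ring).
  pose proof (roots_sum A sm ss mu rho be r CI s H1 H2 H3 H4 H5) as Hsum.
  pose proof (roots_prod A sm ss mu rho be r CI s H1 H2 H3 H4 H5 Hs) as Hprod.
  rewrite !Fres_fact by auto. rewrite <- Hsum, <- Hprod. split; ring.
Qed.

Definition g0e A sm ss mu CI (S Im Is : R) := A - sm * S * Im - ss * S * (Is - CI) - mu * S.
Definition g1e sm ss mu rho be CI (S Im Is : R) := sm * S * Im + ss * S * (Is - CI) - (mu + rho + be) * Im.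
Definition g2e mu be r CI (S Im Is : R) := be * Im - r * CI - mu * Is.
Definition LNu be rho := mkL9 1 1 0 0 1 0 be be (be + rho).

Lemma e1_ident A sm ss mu rho be r CI S Kq x y z : 0 < sm -> 0 < ss -> 0 < mu -> 0 < rho -> 0 < be ->
  let b21 := eb21 A sm ss mu rho be r CI S in let b22 := eb22 A sm ss mu rho be r CI S in
  let Im := sImo A sm mu rho be S in let Is := sIso A sm mu rho be r CI S in
  Vd (sQ 1 (- mu) (- (be + rho)) b21 b22 Kq) (LNu be rho) x y z
     (g0e A sm ss mu CI (S + x) (Im + y) (Is + z)) (g1e sm ss mu rho be CI (S + x) (Im + y) (Is + z))
     (g2e mu be r CI (S + x) (Im + y) (Is + z))
  = 2 * (X1 (- mu) (- (be + rho)) b21 b22 (x + y) y * ((- mu) * (x + y) + (- (be + rho)) * y) +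
         X2 (- mu) (- (be + rho)) b21 b22 (x + y) y * (b21 * (x + y) + b22 * y + (ss * S / (be + rho)) * (be * x + be * y + (be + rho) * z)
              + (sm * x * y + ss * x * z)))
    + Kq * (2 * (be * x + be * y + (be + rho) * z) * (- mu * (be * x + be * y + (be + rho) * z)))
    + 2 * X2 (- mu) (- (be + rho)) b21 b22 (x + y) y * Fres A sm ss mu rho be r CI S.
Proof.
  intros H1 H2 H3 H4 H5. intros.
  subst b21 b22 Im Is.
  unfold Vd, qd, cc1, cc2, cc3, X1, X2, sQ, LNu, g0e, g1e, g2e, Fres, eb21, eb22, Lam, sImo, sIso, sR0; simpl; unfold Dt.
  field. repeat split; nra.
Qed.

Lemma pc_LNu be rho x y z : pc (LNu be rho) x y z = (x + y) ^ 2 + y ^ 2 + (be * x + be * y + (be + rho) * z) ^ 2.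
Proof. unfold pc, cc1, cc2, cc3, LNu; simpl. ring. Qed.

Lemma LNu_kappa be d x y z : 0 < be -> 0 < d ->
  let kap := 3 + 3 * be ^ 2 + 3 * d ^ 2 + 2 * (1 + be ^ 2) / d ^ 2 in
  x ^ 2 + y ^ 2 + z ^ 2 <= kap * ((x + y) ^ 2 + y ^ 2 + (be * x + be * y + d * z) ^ 2) /\
  (x + y) ^ 2 + y ^ 2 + (be * x + be * y + d * z) ^ 2 <= kap * (x ^ 2 + y ^ 2 + z ^ 2).
Proof.
  intros Hbe Hd kap. set (N := x + y). set (u := be * x + be * y + d * z).
  assert (Hx : x = N - y) by (unfold N; ring). assert (Hz : z = (u - be * N) / d) by (unfold u, N; field; lra).
  assert (Hd2 : 0 < d ^ 2) by (apply pow_lt; lra).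
  pose proof (pow2_ge_0 N). pose proof (pow2_ge_0 y). pose proof (pow2_ge_0 u). pose proof (pow2_ge_0 x). pose proof (pow2_ge_0 z).
  assert (Hk1 : 3 + 2 * be ^ 2 / d ^ 2 + 2 / d ^ 2 <= kap).
  { unfold kap. assert (0 <= 3 * be ^ 2 + 3 * d ^ 2) by (pose proof (pow2_ge_0 be); lra).
    replace (2 * (1 + be ^ 2) / d ^ 2) with (2 * be ^ 2 / d ^ 2 + 2 / d ^ 2) by (field; lra). lra. }
  assert (Hk2 : 3 + 3 * be ^ 2 + 3 * d ^ 2 <= kap).
  { unfold kap. assert (0 <= 2 * (1 + be ^ 2) / d ^ 2). apply Rmult_le_pos. pose proof (pow2_ge_0 be); lra. left; apply Rinv_0_lt_compat; lra. lra. }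
  split.
  - assert (x ^ 2 <= 2 * N ^ 2 + 2 * y ^ 2) by (rewrite Hx; pose proof (pow2_ge_0 (N + y)); nra).
    assert (z ^ 2 <= 2 * u ^ 2 / d ^ 2 + 2 * be ^ 2 / d ^ 2 * N ^ 2).
    { rewrite Hz. replace (((u - be * N) / d) ^ 2) with ((u - be * N) ^ 2 / d ^ 2) by (field; lra).
      replace (2 * u ^ 2 / d ^ 2 + 2 * be ^ 2 / d ^ 2 * N ^ 2) with ((2 * u ^ 2 + 2 * be ^ 2 * N ^ 2) / d ^ 2) by (field; lra).
      apply Rmult_le_compat_r. left; apply Rinv_0_lt_compat; lra. pose proof (pow2_ge_0 (u + be * N)). nra. }
    assert (0 <= 2 * be ^ 2 / d ^ 2) by (apply Rmult_le_pos; [pose proof (pow2_ge_0 be); lra| left; apply Rinv_0_lt_compat; lra]).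
    assert (0 <= 2 / d ^ 2) by (apply Rmult_le_pos; [lra| left; apply Rinv_0_lt_compat; lra]).
    assert ((3 + 2 * be ^ 2 / d ^ 2 + 2 / d ^ 2) * (N ^ 2 + y ^ 2 + u ^ 2) <= kap * (N ^ 2 + y ^ 2 + u ^ 2)) by (apply Rmult_le_compat_r; lra).
    unfold Rdiv in *. nra.
  - assert (N ^ 2 <= 2 * x ^ 2 + 2 * y ^ 2) by (unfold N; pose proof (pow2_ge_0 (x - y)); nra).
    assert (u ^ 2 <= 3 * (be ^ 2 * x ^ 2 + be ^ 2 * y ^ 2 + d ^ 2 * z ^ 2)).
    { unfold u. pose proof (pow2_ge_0 (be * x - be * y)). pose proof (pow2_ge_0 (be * x - d * z)). pose proof (pow2_ge_0 (be * y - d * z)). nra. }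
    assert ((3 + 3 * be ^ 2 + 3 * d ^ 2) * (x ^ 2 + y ^ 2 + z ^ 2) <= kap * (x ^ 2 + y ^ 2 + z ^ 2)) by (apply Rmult_le_compat_r; lra).
    pose proof (pow2_ge_0 be). pose proof (pow2_ge_0 d).
    assert (0 <= be ^ 2 * z ^ 2) by (apply Rmult_le_pos; lra).
    assert (0 <= d ^ 2 * x ^ 2) by (apply Rmult_le_pos; lra). assert (0 <= d ^ 2 * y ^ 2) by (apply Rmult_le_pos; lra).
    nra.
Qed.

Lemma LNu_region be rho x y z rp : 0 < be -> 0 < rho -> 0 < rp -> pc (LNu be rho) x y z < rp ^ 2 ->
  Rabs (x + y) < rp /\ Rabs y < rp /\ Rabs (be * x + be * y + (be + rho) * z) < rp /\
  Rabs x <= 2 * rp /\ Rabs z <= (1 + be) * rp / (be + rho).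
Proof.
  intros Hbe Hrho Hrp Hp. rewrite pc_LNu in Hp.
  pose proof (pow2_ge_0 (x + y)) as P1. pose proof (pow2_ge_0 y) as P2. pose proof (pow2_ge_0 (be * x + be * y + (be + rho) * z)) as P3.
  assert (H1 : Rabs (x + y) < rp) by (apply sq_abs_lt; auto; lra).
  assert (H2 : Rabs y < rp) by (apply sq_abs_lt; auto; lra).
  assert (H3 : Rabs (be * x + be * y + (be + rho) * z) < rp) by (apply sq_abs_lt; auto; lra).
  assert (Hx : Rabs x <= Rabs (x + y) + Rabs y) by (replace x with ((x + y) + - y) at 1 by ring; rewrite <- (Rabs_Ropp y); apply Rabs_triang).
  repeat split; try lra.
  assert (Hz : z = ((be * x + be * y + (be + rho) * z) - be * (x + y)) / (be + rho)) by (field; lra).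
  rewrite Hz. unfold Rdiv. rewrite Rabs_mult, (Rabs_right (/ (be + rho))) by (left; apply Rinv_0_lt_compat; lra).
  apply Rmult_le_compat_r. left; apply Rinv_0_lt_compat; lra.
  eapply Rle_trans. unfold Rminus. apply Rabs_triang. rewrite Rabs_Ropp, Rabs_mult, (Rabs_right be) by lra. nra.
Qed.

Lemma e_bound sm ss be rho rho0 x y z : 0 < sm -> 0 < ss -> 0 < be -> 0 < rho -> 0 <= rho0 ->
  Rabs (x + y) <= rho0 -> Rabs y <= rho0 -> Rabs (be * x + be * y + (be + rho) * z) <= rho0 ->
  Rabs (sm * x * y + ss * x * z) <= (sm + ss * (1 + be) / (be + rho)) * rho0 *
      (Rabs (x + y) + Rabs y + Rabs (be * x + be * y + (be + rho) * z)).
Proof.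
  intros Hsm Hss Hbe Hrho Hr0 H1 H2 H3.
  assert (Hx : Rabs x <= Rabs (x + y) + Rabs y) by (replace x with ((x + y) + - y) at 1 by ring; rewrite <- (Rabs_Ropp y); apply Rabs_triang).
  assert (Hz : Rabs z <= (1 + be) * rho0 / (be + rho)).
  { assert (Hz : z = ((be * x + be * y + (be + rho) * z) - be * (x + y)) / (be + rho)) by (field; lra).
    rewrite Hz. unfold Rdiv. rewrite Rabs_mult, (Rabs_right (/ (be + rho))) by (left; apply Rinv_0_lt_compat; lra).
    apply Rmult_le_compat_r. left; apply Rinv_0_lt_compat; lra.
    eapply Rle_trans. unfold Rminus. apply Rabs_triang. rewrite Rabs_Ropp, Rabs_mult, (Rabs_right be) by lra. nra. }
  set (W := Rabs (x + y) + Rabs y + Rabs (be * x + be * y + (be + rho) * z)).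
  assert (HW : Rabs x <= W) by (unfold W; pose proof (Rabs_pos (be * x + be * y + (be + rho) * z)); lra).
  replace (sm * x * y + ss * x * z) with (x * (sm * y + ss * z)) by ring.
  rewrite Rabs_mult.
  assert (Rabs (sm * y + ss * z) <= (sm + ss * (1 + be) / (be + rho)) * rho0).
  { eapply Rle_trans. apply Rabs_triang. rewrite !Rabs_mult, (Rabs_right sm), (Rabs_right ss) by lra.
    assert (sm * Rabs y <= sm * rho0) by (apply Rmult_le_compat_l; lra).
    assert (ss * Rabs z <= ss * ((1 + be) * rho0 / (be + rho))) by (apply Rmult_le_compat_l; lra).
    replace ((sm + ss * (1 + be) / (be + rho)) * rho0) with (sm * rho0 + ss * ((1 + be) * rho0 / (be + rho))) by (field; lra). lra. }
  pose proof (Rabs_pos x). pose proof (Rabs_pos (sm * y + ss * z)).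
  replace ((sm + ss * (1 + be) / (be + rho)) * rho0 * W) with (W * ((sm + ss * (1 + be) / (be + rho)) * rho0)) by ring.
  apply Rmult_le_compat; auto.
Qed.

Lemma hag_e P Se Ime Ise rb : rb < Ise - pCI P ->
  forall S Im Is, boxp Se Ime Ise rb S Im Is ->
    fS P S Im Is = g0e (pA P) (psm P) (pss P) (pmu P) (pCI P) S Im Is /\
    fIm P S Im Is = g1e (psm P) (pss P) (pmu P) (prho P) (pbeta P) (pCI P) S Im Is /\
    fIs P S Im Is = g2e (pmu P) (pbeta P) (pr P) (pCI P) S Im Is.
Proof.
  intros Hrb S Im Is [B1 [B2 B3]].
  assert (HIs : pCI P < Is) by (revert B3; unfold Rabs; destruct Rcase_abs; lra).
  unfold fS, fIm, fIs, g0e, g1e, g2e, posp, Tr.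
  rewrite Rmax_right by lra. destruct (Rlt_dec Is (pCI P)); [lra|]. repeat split; ring.
Qed.

Lemma gLip_e P Se Ime Ise rb : 0 <= rb -> exists Lg Mg, 0 <= Lg /\ 0 <= Mg /\
  gLip (g0e (pA P) (psm P) (pss P) (pmu P) (pCI P)) Se Ime Ise rb Lg Mg /\
  gLip (g1e (psm P) (pss P) (pmu P) (prho P) (pbeta P) (pCI P)) Se Ime Ise rb Lg Mg /\
  gLip (g2e (pmu P) (pbeta P) (pr P) (pCI P)) Se Ime Ise rb Lg Mg.
Proof.
  intros Hrb. apply three_gLip; auto.
  - destruct (poly6_gLip' (pA P) (pss P * pCI P - pmu P) 0 0 (- psm P) (- pss P) Se Ime Ise rb Hrb) as [L0 [M0 [? [? H0]]]].
    exists L0, M0. split; auto. split; auto. eapply gLip_ext; [|exact H0]. intros. unfold g0e, poly6. ring.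
  - destruct (poly6_gLip' 0 (- pss P * pCI P) (- (pmu P + prho P + pbeta P)) 0 (psm P) (pss P) Se Ime Ise rb Hrb) as [L0 [M0 [? [? H0]]]].
    exists L0, M0. split; auto. split; auto. eapply gLip_ext; [|exact H0]. intros. unfold g1e, poly6. ring.
  - destruct (poly6_gLip' (- pr P * pCI P) 0 (pbeta P) (- pmu P) 0 0 Se Ime Ise rb Hrb) as [L0 [M0 [? [? H0]]]].
    exists L0, M0. split; auto. split; auto. eapply gLip_ext; [|exact H0]. intros. unfold g2e, poly6. ring.
Qed.

Lemma T_pos A sm ss mu rho be r CI S : 0 < sm -> 0 < ss -> 0 < mu -> 0 < rho -> 0 < be ->
  Fres A sm ss mu rho be r CI S = 0 -> 0 < S -> 0 < sImo A sm mu rho be S -> CI < sIso A sm mu rho be r CI S ->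
  0 < - (- mu + eb22 A sm ss mu rho be r CI S).
Proof.
  intros H1 H2 H3 H4 H5 HF HS HIm HIs. unfold eb22, Lam.
  set (Im := sImo A sm mu rho be S) in *. set (Is := sIso A sm mu rho be r CI S) in *.
  unfold Fres in HF. fold Im Is in HF.
  assert (Hk : (mu + rho + be - sm * S) * Im = ss * S * (Is - CI)) by lra.
  assert (0 < ss * S * (Is - CI)) by (apply Rmult_lt_0_compat; [apply Rmult_lt_0_compat|]; lra).
  assert (0 < mu + rho + be - sm * S) by nra.
  assert (0 < sm * Im) by nra. assert (0 < ss * (Is - CI)) by nra.
  lra.
Qed.

Theorem e1_las (P : Params) (S : R) : params_pos P ->
  Fres (pA P) (psm P) (pss P) (pmu P) (prho P) (pbeta P) (pr P) (pCI P) S = 0 -> 0 < S ->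
  0 < sImo (pA P) (psm P) (pmu P) (prho P) (pbeta P) S ->
  pCI P < sIso (pA P) (psm P) (pmu P) (prho P) (pbeta P) (pr P) (pCI P) S ->
  0 < Dt (- pmu P) (- (pbeta P + prho P)) (eb21 (pA P) (psm P) (pss P) (pmu P) (prho P) (pbeta P) (pr P) (pCI P) S)
         (eb22 (pA P) (psm P) (pss P) (pmu P) (prho P) (pbeta P) (pr P) (pCI P) S) ->
  loc_asym_stable P (S, sImo (pA P) (psm P) (pmu P) (prho P) (pbeta P) S, sIso (pA P) (psm P) (pmu P) (prho P) (pbeta P) (pr P) (pCI P) S).
Proof.
  intros Hpos HF HS HIm HIs HD.
  pose proof Hpos as [HA [Hsm [Hss [Hmu [Hrho [Hbe [Hr HCI]]]]]]].
  pose proof (T_pos _ _ _ _ _ _ _ _ S Hsm Hss Hmu Hrho Hbe HF HS HIm HIs) as HT.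
  set (A := pA P) in *. set (sm := psm P) in *. set (ss := pss P) in *. set (mu := pmu P) in *.
  set (rho := prho P) in *. set (be := pbeta P) in *. set (r := pr P) in *. set (CI := pCI P) in *.
  set (Ime := sImo A sm mu rho be S) in *. set (Ise := sIso A sm mu rho be r CI S) in *.
  set (b11 := - mu) in *. set (b12 := - (be + rho)) in *.
  set (b21 := eb21 A sm ss mu rho be r CI S) in *. set (b22 := eb22 A sm ss mu rho be r CI S) in *.
  set (d := be + rho) in *.
  set (zeta := ss * S / d).
  set (Kq := KB b11 b12 b21 b22 mu zeta).
  assert (HKq : 1 <= Kq).
  { unfold Kq, KB. assert (0 <= Xm b11 b12 b21 b22 ^ 2 * zeta ^ 2 / (mu * Rabs (Dt b11 b12 b21 b22 * - (b11 + b22)))).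
    apply Rmult_le_pos. apply Rmult_le_pos; apply pow2_ge_0. left; apply Rinv_0_lt_compat. apply Rmult_lt_0_compat. lra.
    apply Rabs_pos_lt. apply Rmult_integral_contrapositive_currified; lra. lra. }
  set (cm := Rmin (Dt b11 b12 b21 b22 * (- (b11 + b22))) mu).
  assert (Hcm : 0 < cm) by (unfold cm; apply Rmin_case; [apply Rmult_lt_0_compat|]; lra).
  set (Ce := sm + ss * (1 + be) / d).
  assert (HCe : 0 <= Ce) by (unfold Ce, d; assert (0 <= ss * (1 + be) / (be + rho)) by (apply Rmult_le_pos; [nra| left; apply Rinv_0_lt_compat; lra]); lra).
  set (Kx := Xm b11 b12 b21 b22 * Ce).
  assert (HKx : 0 <= Kx) by (unfold Kx; pose proof (Xm_pos b11 b12 b21 b22); apply Rmult_le_pos; lra).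
  destruct (rho_choice cm Kx Hcm HKx) as [Hrc Hrho0].
  set (rho0 := cm / (12 * Kx + 1)) in *.
  set (rb := (Ise - CI) / 2).
  assert (Hrb : 0 < rb) by (unfold rb; lra).
  assert (Hd : 0 < d) by (unfold d; lra).
  set (fct := 2 + (1 + be) / d).
  assert (Hfct : 2 < fct) by (unfold fct; assert (0 < (1 + be) / d) by (apply Rdiv_lt_0_compat; lra); lra).
  set (rp := Rmin rho0 (rb / fct)).
  assert (Hrbf : 0 < rb / fct) by (apply Rdiv_lt_0_compat; lra).
  assert (Hrp : 0 < rp) by (unfold rp; apply Rmin_case; lra).
  assert (Hrp1 : rp <= rho0) by apply Rmin_l. assert (Hrp2 : rp <= rb / fct) by apply Rmin_r.
  assert (Hrp3 : rp * fct <= rb) by (apply Rmult_le_reg_r with (/ fct); [apply Rinv_0_lt_compat; lra|]; unfold Rdiv in Hrp2; rewrite Rmult_assoc, Rinv_r by lra; lra).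
  set (Q := sQ 1 b11 b12 b21 b22 Kq).
  destruct (gLip_e P S Ime Ise rb ltac:(lra)) as [Lg [Mg [HLg [HMg [G0 [G1 G2]]]]]].
  set (kap := 3 + 3 * be ^ 2 + 3 * d ^ 2 + 2 * (1 + be ^ 2) / d ^ 2).
  assert (Hkap : 0 < kap).
  { unfold kap. assert (0 <= 2 * (1 + be ^ 2) / d ^ 2). apply Rmult_le_pos. pose proof (pow2_ge_0 be); lra. left; apply Rinv_0_lt_compat; apply pow_lt; lra.
    pose proof (pow2_ge_0 be); pose proof (pow2_ge_0 d); lra. }
  unfold loc_asym_stable.
  apply (stable_assembly P S Ime Ise (g0e A sm ss mu CI) (g1e sm ss mu rho be CI) (g2e mu be r CI) rb Lg Mg Q (LNu be rho)
           (Rmin (Dt b11 b12 b21 b22) Kq) (Bs b11 b12 b21 b22 + Kq) (cm / 2) (rp ^ 2) kap); auto; try lra.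
  - apply Rmin_case; lra.
  - pose proof (Rabs_pos (Dt b11 b12 b21 b22)). unfold Bs.
    assert (0 <= b11 ^ 2 + b12 ^ 2 + b21 ^ 2 + b22 ^ 2) by (pose proof (pow2_ge_0 b11); pose proof (pow2_ge_0 b12); pose proof (pow2_ge_0 b21); pose proof (pow2_ge_0 b22); lra).
    lra.
  - apply pow_lt; lra.
  - intros a b c. unfold Q. rewrite qv_sQ. pose proof (Xf_lower b11 b12 b21 b22 a b). pose proof (Xf_upper b11 b12 b21 b22 a b).
    assert (0 <= a ^ 2 + b ^ 2) by (pose proof (pow2_ge_0 a); pose proof (pow2_ge_0 b); lra).
    pose proof (pow2_ge_0 c).
    set (mn := Rmin (Dt b11 b12 b21 b22) Kq).
    assert (mn <= Dt b11 b12 b21 b22) by apply Rmin_l. assert (mn <= Kq) by apply Rmin_r.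
    assert (0 < mn) by (unfold mn; apply Rmin_case; lra).
    assert (0 <= Bs b11 b12 b21 b22) by (unfold Bs; pose proof (Rabs_pos (Dt b11 b12 b21 b22)); pose proof (pow2_ge_0 b11); pose proof (pow2_ge_0 b12); pose proof (pow2_ge_0 b21); pose proof (pow2_ge_0 b22); lra).
    split.
    + assert (mn * (a ^ 2 + b ^ 2) <= Dt b11 b12 b21 b22 * (a ^ 2 + b ^ 2)) by (apply Rmult_le_compat_r; auto).
      assert (mn * c ^ 2 <= Kq * c ^ 2) by (apply Rmult_le_compat_r; auto). nra.
    + assert (0 <= Bs b11 b12 b21 b22 * c ^ 2) by (apply Rmult_le_pos; lra).
      assert (0 <= Kq * (a ^ 2 + b ^ 2)) by (apply Rmult_le_pos; lra). nra.
  - intros x y z. rewrite pc_LNu. apply LNu_kappa; lra.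
  - intros x y z Hp. destruct (LNu_region be rho x y z rp Hbe Hrho Hrp Hp) as [R1 [R2 [R3 [R4 R5]]]].
    assert (R5' : (1 + be) * rp / (be + rho) <= rb).
    { unfold fct in Hrp3. fold d. replace ((1 + be) * rp / d) with (rp * ((1 + be) / d)) by (field; lra). nra. }
    unfold fct in Hrp3. assert (0 < (1 + be) / d) by (apply Rdiv_lt_0_compat; lra).
    repeat split; nra.
  - intros x y z Hp. destruct (LNu_region be rho x y z rp Hbe Hrho Hrp Hp) as [R1 [R2 [R3 [R4 R5]]]].
    pose proof (e1_ident A sm ss mu rho be r CI S Kq x y z Hsm Hss Hmu Hrho Hbe) as EI. cbv zeta in EI.
    eapply Rle_trans; [right; apply EI|].
    fold b21 b22. fold Ime Ise. rewrite HF, Rmult_0_r, Rplus_0_r.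
    rewrite pc_LNu.
    pose proof (lemmaB b11 b12 b21 b22 mu zeta Ce rho0 (x + y) y (be * x + be * y + (be + rho) * z) (sm * x * y + ss * x * z)
                 HD HT Hmu HCe ltac:(lra)) as LB.
    replace (ss * S / (be + rho)) with zeta by reflexivity.
    fold Kq in LB. apply LB.
    + assert (Hrc' : 12 * Xm b11 b12 b21 b22 * Ce * rho0 <= cm) by (unfold Kx in Hrc; lra). exact Hrc'.
    + apply e_bound; auto; lra.
  - apply hag_e. fold CI. unfold rb. lra.
Qed.

Lemma Xf_dir b11 b12 b21 b22 : b11 + b22 <> 0 ->
  0 < Dt b11 b12 b21 b22 + b22 ^ 2 + b21 ^ 2 \/ 0 < Dt b11 b12 b21 b22 + b12 ^ 2 + b11 ^ 2.
Proof.
  intros H. assert (0 < (b11 + b22) ^ 2) by (apply pow2_gt_0; auto).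
  assert ((Dt b11 b12 b21 b22 + b22 ^ 2 + b21 ^ 2) + (Dt b11 b12 b21 b22 + b12 ^ 2 + b11 ^ 2) = (b11 + b22) ^ 2 + (b12 - b21) ^ 2)
    by (unfold Dt; ring).
  pose proof (pow2_ge_0 (b12 - b21)).
  destruct (Rlt_dec 0 (Dt b11 b12 b21 b22 + b22 ^ 2 + b21 ^ 2)); [left; auto | right; lra].
Qed.

Theorem e2_unst (P : Params) (S : R) : params_pos P ->
  Fres (pA P) (psm P) (pss P) (pmu P) (prho P) (pbeta P) (pr P) (pCI P) S = 0 -> 0 < S ->
  0 < sImo (pA P) (psm P) (pmu P) (prho P) (pbeta P) S ->
  pCI P < sIso (pA P) (psm P) (pmu P) (prho P) (pbeta P) (pr P) (pCI P) S ->
  Dt (- pmu P) (- (pbeta P + prho P)) (eb21 (pA P) (psm P) (pss P) (pmu P) (prho P) (pbeta P) (pr P) (pCI P) S)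
         (eb22 (pA P) (psm P) (pss P) (pmu P) (prho P) (pbeta P) (pr P) (pCI P) S) < 0 ->
  unstable P (S, sImo (pA P) (psm P) (pmu P) (prho P) (pbeta P) S, sIso (pA P) (psm P) (pmu P) (prho P) (pbeta P) (pr P) (pCI P) S).
Proof.
  intros Hpos HF HS HIm HIs HD.
  pose proof Hpos as [HA [Hsm [Hss [Hmu [Hrho [Hbe [Hr HCI]]]]]]].
  pose proof (T_pos _ _ _ _ _ _ _ _ S Hsm Hss Hmu Hrho Hbe HF HS HIm HIs) as HT.
  set (A := pA P) in *. set (sm := psm P) in *. set (ss := pss P) in *. set (mu := pmu P) in *.
  set (rho := prho P) in *. set (be := pbeta P) in *. set (r := pr P) in *. set (CI := pCI P) in *.
  set (Ime := sImo A sm mu rho be S) in *. set (Ise := sIso A sm mu rho be r CI S) in *.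
  set (b11 := - mu) in *. set (b12 := - (be + rho)) in *.
  set (b21 := eb21 A sm ss mu rho be r CI S) in *. set (b22 := eb22 A sm ss mu rho be r CI S) in *.
  set (d := be + rho) in *.
  set (zeta := ss * S / d).
  set (Kq := KB b11 b12 b21 b22 mu zeta).
  set (cm := Rmin (- Dt b11 b12 b21 b22 * (- (b11 + b22))) mu).
  assert (Hcm : 0 < cm) by (unfold cm; apply Rmin_case; [apply Rmult_lt_0_compat|]; lra).
  set (Ce := sm + ss * (1 + be) / d).
  assert (HCe : 0 <= Ce) by (unfold Ce, d; assert (0 <= ss * (1 + be) / (be + rho)) by (apply Rmult_le_pos; [nra| left; apply Rinv_0_lt_compat; lra]); lra).
  set (Kx := Xm b11 b12 b21 b22 * Ce).
  assert (HKx : 0 <= Kx) by (unfold Kx; pose proof (Xm_pos b11 b12 b21 b22); apply Rmult_le_pos; lra).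
  destruct (rho_choice cm Kx Hcm HKx) as [Hrc Hrho0].
  set (rho0 := cm / (12 * Kx + 1)) in *.
  set (rb := (Ise - CI) / 2).
  assert (Hrb : 0 < rb) by (unfold rb; lra).
  assert (Hd : 0 < d) by (unfold d; lra).
  set (fct := 2 + (1 + be) / d).
  assert (Hfct : 2 < fct) by (unfold fct; assert (0 < (1 + be) / d) by (apply Rdiv_lt_0_compat; lra); lra).
  set (rp := Rmin rho0 (rb / fct)).
  assert (Hrbf : 0 < rb / fct) by (apply Rdiv_lt_0_compat; lra).
  assert (Hrp : 0 < rp) by (unfold rp; apply Rmin_case; lra).
  assert (Hrp1 : rp <= rho0) by apply Rmin_l. assert (Hrp2 : rp <= rb / fct) by apply Rmin_r.
  assert (Hrp3 : rp * fct <= rb) by (apply Rmult_le_reg_r with (/ fct); [apply Rinv_0_lt_compat; lra|]; unfold Rdiv in Hrp2; rewrite Rmult_assoc, Rinv_r by lra; lra).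
  set (Q := sQ 1 b11 b12 b21 b22 (- Kq)).
  set (kap := 3 + 3 * be ^ 2 + 3 * d ^ 2 + 2 * (1 + be ^ 2) / d ^ 2).
  assert (Hkap : 0 < kap).
  { unfold kap. assert (0 <= 2 * (1 + be ^ 2) / d ^ 2). apply Rmult_le_pos. pose proof (pow2_ge_0 be); lra. left; apply Rinv_0_lt_compat; apply pow_lt; lra.
    pose proof (pow2_ge_0 be); pose proof (pow2_ge_0 d); lra. }
  assert (HKq : 0 <= Kq).
  { unfold Kq, KB. assert (0 <= Xm b11 b12 b21 b22 ^ 2 * zeta ^ 2 / (mu * Rabs (Dt b11 b12 b21 b22 * - (b11 + b22)))).
    apply Rmult_le_pos. apply Rmult_le_pos; apply pow2_ge_0. left; apply Rinv_0_lt_compat. apply Rmult_lt_0_compat. lra.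
    apply Rabs_pos_lt. apply Rmult_integral_contrapositive_currified; lra. lra. }
  assert (Hbs : 0 <= Bs b11 b12 b21 b22) by (unfold Bs; pose proof (Rabs_pos (Dt b11 b12 b21 b22)); pose proof (pow2_ge_0 b11); pose proof (pow2_ge_0 b12); pose proof (pow2_ge_0 b21); pose proof (pow2_ge_0 b22); lra).
  assert (Hdir : exists x1 y1 z1, 0 < Vq Q (LNu be rho) x1 y1 z1).
  { destruct (Xf_dir b11 b12 b21 b22 ltac:(lra)) as [Hx|Hy].
    - exists 1, 0, (- be / d).
      assert (E : Vq Q (LNu be rho) 1 0 (- be / d) = Dt b11 b12 b21 b22 + b22 ^ 2 + b21 ^ 2).
      { unfold Vq, Q. rewrite qv_sQ. unfold Xf, cc1, cc2, cc3, LNu, d; simpl. field. lra. }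
      rewrite E; auto.
    - exists (-1), 1, 0.
      assert (E : Vq Q (LNu be rho) (-1) 1 0 = Dt b11 b12 b21 b22 + b12 ^ 2 + b11 ^ 2).
      { unfold Vq, Q. rewrite qv_sQ. unfold Xf, cc1, cc2, cc3, LNu, d; simpl. ring. }
      rewrite E; auto. }
  destruct Hdir as [x1 [y1 [z1 Hdir]]].
  apply (unstable_assembly P S Ime Ise (g0e A sm ss mu CI) (g1e sm ss mu rho be CI) (g2e mu be r CI) rb Q (LNu be rho)
           (Bs b11 b12 b21 b22 + 1) (cm / 2) (rp ^ 2) kap x1 y1 z1); auto; try lra.
  - apply pow_lt; lra.
  - intros a b c. unfold Q. rewrite qv_sQ. pose proof (Xf_upper b11 b12 b21 b22 a b).
    assert (0 <= a ^ 2 + b ^ 2) by (pose proof (pow2_ge_0 a); pose proof (pow2_ge_0 b); lra).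
    pose proof (pow2_ge_0 c). assert (0 <= Kq * c ^ 2) by (apply Rmult_le_pos; lra).
    assert (0 <= Bs b11 b12 b21 b22 * c ^ 2) by (apply Rmult_le_pos; lra). nra.
  - intros x y z. rewrite pc_LNu. apply LNu_kappa; lra.
  - intros x y z Hp. destruct (LNu_region be rho x y z rp Hbe Hrho Hrp Hp) as [R1 [R2 [R3 [R4 R5]]]].
    assert (R5' : (1 + be) * rp / (be + rho) <= rb).
    { unfold fct in Hrp3. fold d. replace ((1 + be) * rp / d) with (rp * ((1 + be) / d)) by (field; lra). nra. }
    unfold fct in Hrp3. assert (0 < (1 + be) / d) by (apply Rdiv_lt_0_compat; lra).
    repeat split; nra.
  - intros x y z Hp. destruct (LNu_region be rho x y z rp Hbe Hrho Hrp Hp) as [R1 [R2 [R3 [R4 R5]]]].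
    pose proof (e1_ident A sm ss mu rho be r CI S (- Kq) x y z Hsm Hss Hmu Hrho Hbe) as EI. cbv zeta in EI.
    eapply Rle_trans; [|right; symmetry; apply EI].
    fold b21 b22. fold Ime Ise. rewrite HF, Rmult_0_r, Rplus_0_r.
    rewrite pc_LNu.
    pose proof (lemmaC b11 b12 b21 b22 mu zeta Ce rho0 (x + y) y (be * x + be * y + (be + rho) * z) (sm * x * y + ss * x * z)
                 HD HT Hmu HCe ltac:(lra)) as LC.
    replace (ss * S / (be + rho)) with zeta by reflexivity.
    fold Kq in LC.
    replace (- Kq * (2 * (be * x + be * y + (be + rho) * z) * (- mu * (be * x + be * y + (be + rho) * z))))
      with (- (Kq * (2 * (be * x + be * y + (be + rho) * z) * (- mu * (be * x + be * y + (be + rho) * z))))) by ring.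
    apply LC.
    + assert (Hrc' : 12 * Xm b11 b12 b21 b22 * Ce * rho0 <= cm) by (unfold Kx in Hrc; lra). exact Hrc'.
    + apply e_bound; auto; lra.
  - apply hag_e. fold CI. unfold rb. lra.
Qed.

Lemma D_root_sign A sm ss mu rho be r CI s : 0 < sm -> 0 < ss -> 0 < mu -> 0 < rho -> 0 < be ->
  s ^ 2 = sdisc A sm ss mu rho be r CI -> forall S S', (S = sS A sm ss mu rho be r CI s /\ S' = sS A sm ss mu rho be r CI (- s) \/
                                                       S = sS A sm ss mu rho be r CI (- s) /\ S' = sS A sm ss mu rho be r CI s) ->
  0 < S ->
  Dt (- mu) (- (be + rho)) (eb21 A sm ss mu rho be r CI S) (eb22 A sm ss mu rho be r CI S) = Q0 sm ss mu be * (S' - S) /\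
  Fres A sm ss mu rho be r CI S = 0.
Proof.
  intros H1 H2 H3 H4 H5 Hs S S' HSS HS.
  destruct (Fres_root A sm ss mu rho be r CI s H1 H2 H3 H4 H5 Hs) as [F1 F2].
  pose proof (roots_prod A sm ss mu rho be r CI s H1 H2 H3 H4 H5 Hs) as Hp.
  assert (HF : Fres A sm ss mu rho be r CI S = 0) by (destruct HSS as [[-> _]|[-> _]]; auto).
  assert (HSS' : S * S' = spi A sm ss mu rho be) by (destruct HSS as [[-> ->]|[-> ->]]; rewrite <- Hp; ring).
  split; auto.
  pose proof (D_ident A sm ss mu rho be r CI S H1 H2 H3 H4 H5) as HD. rewrite HF in HD.
  assert (HkA : (mu + be + rho) * A = Q0 sm ss mu be * spi A sm ss mu rho be) by (unfold spi, Q0; field; nra).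
  rewrite HkA, <- HSS' in HD.
  apply Rmult_eq_reg_r with S; [|lra]. rewrite HD. ring.
Qed.

Theorem theorem3p2 (P : Params) (Hpos : params_pos P) :
  (1 < Rnum P < 1 + psm P * (pmu P + pr P) / (pmu P * pbeta P) * pCI P ->
     loc_asym_stable P (Estar P)) /\
  (endemic_Ei P (Sone P) -> Sone P <> Stwo P -> loc_asym_stable P (Eone P)) /\
  (endemic_Ei P (Stwo P) -> Sone P <> Stwo P -> unstable P (Etwo P)).
Proof.
  pose proof Hpos as [HA [Hsm [Hss [Hmu [Hrho [Hbe [Hr HCI]]]]]]].
  split; [|split].
  - apply estar_las; auto.
  - intros [Hdisc [HS [HIm HIs]]] Hne.
    set (s := sqrt (Defs.disc P)).
    assert (Hs2 : s ^ 2 = sdisc (pA P) (psm P) (pss P) (pmu P) (prho P) (pbeta P) (pr P) (pCI P)) by (unfold s; rewrite pow2_sqrt; auto).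
    assert (E1 : Sone P = sS (pA P) (psm P) (pss P) (pmu P) (prho P) (pbeta P) (pr P) (pCI P) (- s)) by reflexivity.
    assert (E2 : Stwo P = sS (pA P) (psm P) (pss P) (pmu P) (prho P) (pbeta P) (pr P) (pCI P) s) by reflexivity.
    destruct (D_root_sign _ _ _ _ _ _ _ _ s Hsm Hss Hmu Hrho Hbe Hs2 (Sone P) (Stwo P) ltac:(right; split; auto) HS) as [HD HF].
    assert (Hspos : 0 < s).
    { assert (0 <= s) by apply sqrt_pos. destruct (Req_dec s 0); [|lra]. exfalso; apply Hne. rewrite E1, E2, H0.
      replace (- 0) with 0 by ring. reflexivity. }
    assert (Hdiff : 0 < Stwo P - Sone P).
    { rewrite E1, E2. unfold sS. replace ((pmu P + pbeta P + prho P) / (2 * psm P) *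
        (sR0 (pA P) (psm P) (pmu P) (prho P) (pbeta P) - spp (psm P) (pss P) (pmu P) (pbeta P) (pr P) (pCI P) + sqq (psm P) (pss P) (pmu P) (pbeta P) + s) -
        (pmu P + pbeta P + prho P) / (2 * psm P) *
        (sR0 (pA P) (psm P) (pmu P) (prho P) (pbeta P) - spp (psm P) (pss P) (pmu P) (pbeta P) (pr P) (pCI P) + sqq (psm P) (pss P) (pmu P) (pbeta P) + - s))
        with ((pmu P + pbeta P + prho P) / psm P * s) by (field; lra).
      apply Rmult_lt_0_compat; auto. apply Rdiv_lt_0_compat; lra. }
    assert (HQ0 : 0 < Q0 (psm P) (pss P) (pmu P) (pbeta P)) by (unfold Q0; nra).
    apply e1_las; auto.
    rewrite HD. apply Rmult_lt_0_compat; auto.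
  - intros [Hdisc [HS [HIm HIs]]] Hne.
    set (s := sqrt (Defs.disc P)).
    assert (Hs2 : s ^ 2 = sdisc (pA P) (psm P) (pss P) (pmu P) (prho P) (pbeta P) (pr P) (pCI P)) by (unfold s; rewrite pow2_sqrt; auto).
    assert (E1 : Sone P = sS (pA P) (psm P) (pss P) (pmu P) (prho P) (pbeta P) (pr P) (pCI P) (- s)) by reflexivity.
    assert (E2 : Stwo P = sS (pA P) (psm P) (pss P) (pmu P) (prho P) (pbeta P) (pr P) (pCI P) s) by reflexivity.
    destruct (D_root_sign _ _ _ _ _ _ _ _ s Hsm Hss Hmu Hrho Hbe Hs2 (Stwo P) (Sone P) ltac:(left; split; auto) HS) as [HD HF].
    assert (Hspos : 0 < s).
    { assert (0 <= s) by apply sqrt_pos. destruct (Req_dec s 0); [|lra]. exfalso; apply Hne. rewrite E1, E2, H0.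
      replace (- 0) with 0 by ring. reflexivity. }
    assert (Hdiff : 0 < Stwo P - Sone P).
    { rewrite E1, E2. unfold sS. replace ((pmu P + pbeta P + prho P) / (2 * psm P) *
        (sR0 (pA P) (psm P) (pmu P) (prho P) (pbeta P) - spp (psm P) (pss P) (pmu P) (pbeta P) (pr P) (pCI P) + sqq (psm P) (pss P) (pmu P) (pbeta P) + s) -
        (pmu P + pbeta P + prho P) / (2 * psm P) *
        (sR0 (pA P) (psm P) (pmu P) (prho P) (pbeta P) - spp (psm P) (pss P) (pmu P) (pbeta P) (pr P) (pCI P) + sqq (psm P) (pss P) (pmu P) (pbeta P) + - s))
        with ((pmu P + pbeta P + prho P) / psm P * s) by (field; lra).
      apply Rmult_lt_0_compat; auto. apply Rdiv_lt_0_compat; lra. }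
    assert (HQ0 : 0 < Q0 (psm P) (pss P) (pmu P) (pbeta P)) by (unfold Q0; nra).
    apply e2_unst; auto.
    rewrite HD. assert (0 < Q0 (psm P) (pss P) (pmu P) (pbeta P) * (Stwo P - Sone P)) by (apply Rmult_lt_0_compat; auto). lra.
Qed.
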